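(* Let $k\in\mathbb{Z}$, and let $\chi_i$ be a Dirichlet character modulo $q_i$ ($i=1,2$) induced by the primitive character $\chi_i^*$ of modulus $q_i^*\mid q_i$, with $\chi_1(-1)\chi_2(-1)=(-1)^k$. Then for $z\in\mathbb{H}$ and $\mathrm{Re}(s)>1$, \[ E_{\chi_1,\chi_2}(z,s)=\frac{L(2s,\chi_1^*\chi_2^* )}{L(2s,\chi_1\chi_2)}\sum_{a\mid q_1}\sum_{b\mid q_2}\frac{\mu(a)\chi_1^*(a)\mu(b)\chi_2^*(b)}{(ab)^s}\,E_{\chi_1^*,\chi_2^*}\Big(\frac{aq_2}{bq_2^*}z,s\Big). \]
   Context: For Dirichlet characters $\eta_1,\eta_2$ modulo $r_1,r_2$ with $\eta_1(-1)\eta_2(-1)=(-1)^k$, $z=x+iy\in\mathbb{H}$, $\mathrm{Re}(s)>1$, \[ E_{\eta_1,\eta_2}(z,s)=\frac12\sum_{\substack{c,d\in\mathbb{Z}\\ (c,d)=1}}\frac{(r_2y)^s\eta_1(c)\eta_2(d)}{|cr_2z+d|^{2s}}\Big(\frac{|cr_2z+d|}{cr_2z+d}\Big)^k. \] $\mu$ is the Möbius function and $L(s,\chi)$ the Dirichlet $L$-function (of the possibly imprimitive character $\chi_1\chi_2$). *)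

(* Defs.v *)
From Stdlib Require Import Reals ZArith.
From Coquelicot Require Import Coquelicot.
From mathcomp Require prime seq.

Open Scope R_scope.

(* complex power of a positive real: x^s = exp(s log x) *)
Definition cpowR (x : R) (s : C) : C :=
  (exp (Re s * ln x) * cos (Im s * ln x), exp (Re s * ln x) * sin (Im s * ln x)).

Definition cpowZ (u : C) (k : Z) : C :=
  if (0 <=? k)%Z then pow_n u (Z.to_nat k) else Cinv (pow_n u (Z.to_nat (- k))).

Definition dirichlet_char (q : Z) (chi : Z -> C) : Prop :=
  (0 < q)%Z /\ chi 1%Z = RtoC 1 /\
  (forall m n : Z, chi (m * n)%Z = Cmult (chi m) (chi n)) /\
  (forall n : Z, chi (n + q)%Z = chi n) /\
  (forall n : Z, Z.gcd n q <> 1%Z -> chi n = RtoC 0) /\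
  (forall n : Z, Z.gcd n q = 1%Z -> chi n <> RtoC 0).

Definition induced_by (q : Z) (chi : Z -> C) (d : Z) (psi : Z -> C) : Prop :=
  dirichlet_char q chi /\ dirichlet_char d psi /\ Z.divide d q /\
  forall n : Z, chi n = if (Z.gcd n q =? 1)%Z then psi n else RtoC 0.

Definition primitive_char (q : Z) (chi : Z -> C) : Prop :=
  dirichlet_char q chi /\
  forall (d : Z) (psi : Z -> C), (0 < d < q)%Z -> ~ induced_by q chi d psi.

(* Moebius function on positive integers (0 at n <= 0, unused) *)
Definition moebius_nat (n : nat) : Z :=
  if seq.all (fun p => Nat.eqb (prime.logn p n) 1) (prime.primes n)
  then ((-1) ^ Z.of_nat (length (prime.primes n)))%Z else 0%Z.
Definition moebius (n : Z) : Z := if (0 <? n)%Z then moebius_nat (Z.to_nat n) else 0%Z.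

(* Partial sums of the Eisenstein series over the box |c|,|d| <= N *)
Definition eis_term (r2 : Z) (eta1 eta2 : Z -> C) (k : Z) (z s : C) (c d : Z) : C :=
  let w : C := Cplus (Cmult (RtoC (IZR (c * r2))) z) (RtoC (IZR d)) in
  if (Z.gcd c d =? 1)%Z then
    Cmult (Cmult (Cmult (cpowR (IZR r2 * Im z) s) (Cmult (eta1 c) (eta2 d)))
                 (Cinv (cpowR (Cmod w) (Cmult (RtoC 2) s))))
          (cpowZ (Cdiv (RtoC (Cmod w)) w) k)
  else RtoC 0.

Definition eis_partial (r2 : Z) (eta1 eta2 : Z -> C) (k : Z) (z s : C) (N : nat) : C :=
  sum_n (fun i => sum_n (fun j =>
      eis_term r2 eta1 eta2 k z s (Z.of_nat i - Z.of_nat N)%Z (Z.of_nat j - Z.of_nat N)%Z)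
    (2 * N)) (2 * N).

(* E_{eta1,eta2}(z,s), eta2 of modulus r2 *)
Definition Eis (r2 : Z) (eta1 eta2 : Z -> C) (k : Z) (z s : C) : C :=
  Cmult (RtoC (/ 2)) (@lim C_CompleteNormedModule
     (filtermap (eis_partial r2 eta1 eta2 k z s) eventually)).

Definition Lfun (s : C) (f : Z -> C) : C :=
  @lim C_CompleteNormedModule
    (filtermap (fun N => sum_n (fun n =>
        Cmult (f (Z.of_nat (S n))) (Cinv (cpowR (INR (S n)) s))) N) eventually).

Definition divsum (q : Z) (F : Z -> C) : C :=
  sum_n (fun n => let a := Z.of_nat n in
      if ((0 <? a) && (Z.rem q a =? 0))%Z%bool then F a else RtoC 0) (Z.to_nat q).

(* Main.v *)
Require Import Defs.
From Stdlib Require Import Reals ZArith Lra Lia List Permutation ListDec ClassicalEpsilon Classical.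
From Coquelicot Require Import Coquelicot.
From mathcomp Require ssreflect ssrbool ssrnat eqtype seq prime div path.
Open Scope R_scope.

Open Scope R_scope.

Section LSum.
Context {I : Type}.

Fixpoint lsum (f : I -> C) (l : list I) : C :=
  match l with nil => RtoC 0 | x :: l' => Cplus (f x) (lsum f l') end.
Fixpoint rsum (f : I -> R) (l : list I) : R :=
  match l with nil => 0 | x :: l' => f x + rsum f l' end.

Lemma lsum_app f l1 l2 : lsum f (l1 ++ l2) = Cplus (lsum f l1) (lsum f l2).
Proof. induction l1; simpl. ring. rewrite IHl1. ring. Qed.
Lemma rsum_app f l1 l2 : rsum f (l1 ++ l2) = rsum f l1 + rsum f l2.
Proof. induction l1; simpl. ring. rewrite IHl1. ring. Qed.

Lemma lsum_perm f l l' : Permutation l l' -> lsum f l = lsum f l'.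
Proof. induction 1; simpl; auto; try congruence; ring. Qed.
Lemma rsum_perm f l l' : Permutation l l' -> rsum f l = rsum f l'.
Proof. induction 1; simpl; auto; try congruence; ring. Qed.

Lemma lsum_ext f g l : (forall x, In x l -> f x = g x) -> lsum f l = lsum g l.
Proof. induction l; simpl; intros H; auto. rewrite H, IHl; auto. Qed.
Lemma rsum_ext f g l : (forall x, In x l -> f x = g x) -> rsum f l = rsum g l.
Proof. induction l; simpl; intros H; auto. rewrite H, IHl; auto. Qed.

Lemma lsum_plus f g l : lsum (fun x => Cplus (f x) (g x)) l = Cplus (lsum f l) (lsum g l).
Proof. induction l; simpl. ring. rewrite IHl. ring. Qed.
Lemma lsum_scal c f l : lsum (fun x => Cmult c (f x)) l = Cmult c (lsum f l).
Proof. induction l; simpl. ring. rewrite IHl. ring. Qed.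
Lemma lsum_zero f l : (forall x, In x l -> f x = RtoC 0) -> lsum f l = RtoC 0.
Proof. induction l; simpl; intros H; auto. rewrite H, IHl; auto. ring. Qed.
Lemma rsum_scal c f l : rsum (fun x => c * f x) l = c * rsum f l.
Proof. induction l; simpl. ring. rewrite IHl. ring. Qed.

Lemma rsum_nonneg f l : (forall x, 0 <= f x) -> 0 <= rsum f l.
Proof. intros H; induction l; simpl. lra. specialize (H a). lra. Qed.
Lemma rsum_le f g l : (forall x, f x <= g x) -> rsum f l <= rsum g l.
Proof. intros H; induction l; simpl. lra. specialize (H a). lra. Qed.

Lemma Cmod_lsum f l : Cmod (lsum f l) <= rsum (fun x => Cmod (f x)) l.
Proof. induction l; simpl. rewrite Cmod_0; lra.
 eapply Rle_trans. apply Cmod_triangle. lra. Qed.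

Lemma lsum_filter f (p : I -> bool) l :
  lsum f l = Cplus (lsum f (filter p l)) (lsum f (filter (fun x => negb (p x)) l)).
Proof. induction l; simpl. ring. destruct (p a); simpl; rewrite IHl; ring. Qed.
Lemma rsum_filter f (p : I -> bool) l :
  rsum f l = rsum f (filter p l) + rsum f (filter (fun x => negb (p x)) l).
Proof. induction l; simpl. ring. destruct (p a); simpl; rewrite IHl; ring. Qed.

Lemma lsum_filter_zero f (p : I -> bool) l :
  (forall x, In x l -> p x = false -> f x = RtoC 0) -> lsum f l = lsum f (filter p l).
Proof. intros H. rewrite (lsum_filter f p l).
 rewrite (lsum_zero f (filter (fun x => negb (p x)) l)). ring.
 intros x Hx. apply filter_In in Hx. destruct Hx as [Hx1 Hx2].
 apply H; auto. destruct (p x); auto. Qed.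

End LSum.
Lemma lsum_map {I J} (f : I -> C) (h : J -> I) l : lsum f (map h l) = lsum (fun x => f (h x)) l.
Proof. induction l; simpl; auto. rewrite IHl; auto. Qed.
Lemma rsum_map {I J} (f : I -> R) (h : J -> I) l : rsum f (map h l) = rsum (fun x => f (h x)) l.
Proof. induction l; simpl; auto. rewrite IHl; auto. Qed.

Lemma NoDup_map_in {A B} (h : A -> B) l :
  NoDup l -> (forall x y, In x l -> In y l -> h x = h y -> x = y) -> NoDup (map h l).
Proof. induction 1; simpl; intros Hi. constructor. constructor.
 - intros Hin. apply in_map_iff in Hin. destruct Hin as [y [Hy1 Hy2]].
   assert (y = x) by (apply Hi; auto). subst; auto.
 - apply IHNoDup. intros; apply Hi; auto. Qed.

Definition Ceq_dec (x y : C) : {x = y} + {x <> y}.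
Proof. destruct x as [a b], y as [c d].
 destruct (Req_dec_T a c); destruct (Req_dec_T b d); subst; auto;
 right; intros H; inversion H; auto. Defined.
Definition nz (x : C) : bool := if Ceq_dec x (RtoC 0) then false else true.
Lemma nz_true x : nz x = true <-> x <> RtoC 0.
Proof. unfold nz; destruct (Ceq_dec x (RtoC 0)); split; intros; congruence. Qed.
Lemma nz_false x : nz x = false <-> x = RtoC 0.
Proof. unfold nz; destruct (Ceq_dec x (RtoC 0)); split; intros; congruence. Qed.

Lemma Cmod_small_eq (x y : C) : (forall eps, 0 < eps -> Cmod (Cminus x y) <= eps) -> x = y.
Proof. intros H. assert (Hm : Cmod (Cminus x y) = 0).
 { destruct (Cmod_ge_0 (Cminus x y)) as [Hl|He]; auto.
   specialize (H (Cmod (Cminus x y) / 2)). lra. }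
 apply Cmod_eq_0 in Hm. replace x with (Cplus (Cminus x y) y) by ring. rewrite Hm. ring. Qed.

Definition Ccv (u : nat -> C) (S : C) := forall eps, 0 < eps -> exists N, forall n, (N <= n)%nat -> Cmod (Cminus (u n) S) <= eps.

Lemma C_cauchy_lim (u : nat -> C) :
  (forall eps, 0 < eps -> exists N, forall n m, (N <= n)%nat -> (N <= m)%nat -> Cmod (Cminus (u n) (u m)) <= eps) ->
  exists S, Ccv u S /\ S = @lim C_CompleteNormedModule (filtermap u eventually).
Proof.
  intros Hc.
  set (F := filtermap u eventually).
  assert (HF : ProperFilter F) by (apply filtermap_proper_filter, eventually_filter).
  assert (Hcau : cauchy F).
  { intros eps. destruct (Hc (eps/2)) as [N HN]. { destruct eps; simpl; lra. }
    exists (u N). exists N. intros n Hn. apply (@norm_compat1 C_AbsRing C_NormedModule).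
    change (Cmod (Cminus (u n) (u N)) < eps). specialize (HN n N Hn (le_n _)).
    destruct eps; simpl in *; lra. }
  exists (@lim C_CompleteNormedModule F). split; [|reflexivity].
  intros eps Heps.
  assert (Hnf := @norm_factor_gt_0 C_AbsRing C_CompleteNormedModule).
  set (e := mkposreal (eps / @norm_factor C_AbsRing C_CompleteNormedModule) ltac:(apply Rdiv_lt_0_compat; lra)).
  destruct (@complete_cauchy C_CompleteNormedModule F HF Hcau e) as [N HN].
  exists N. intros n Hn. specialize (HN n Hn).
  apply (@norm_compat2 C_AbsRing C_NormedModule) in HN.
  assert (HN' : Cmod (Cminus (u n) (@lim C_CompleteNormedModule F)) < @norm_factor C_AbsRing C_CompleteNormedModule * (eps / @norm_factor C_AbsRing C_CompleteNormedModule)) by exact HN.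
  clear HN. rename HN' into HN.
  unfold Rdiv in HN. rewrite Rmult_comm, Rmult_assoc, Rinv_l in HN; lra.
Qed.

Lemma Ccv_unique u S T : Ccv u S -> Ccv u T -> S = T.
Proof. intros HS HT. apply Cmod_small_eq. intros eps He.
  destruct (HS (eps/2)) as [N1 H1]; [lra|]. destruct (HT (eps/2)) as [N2 H2]; [lra|].
  specialize (H1 (N1+N2)%nat ltac:(lia)). specialize (H2 (N1+N2)%nat ltac:(lia)).
  replace (Cminus S T) with (Cminus (Cminus (u (N1+N2)%nat) T) (Cminus (u (N1+N2)%nat) S)) by ring.
  eapply Rle_trans. unfold Cminus at 1. apply Cmod_triangle. rewrite Cmod_opp. lra. Qed.

Lemma lim_C (u : nat -> C) S : Ccv u S -> @lim C_CompleteNormedModule (filtermap u eventually) = S.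
Proof. intros H.
  destruct (C_cauchy_lim u) as [T [HT ->]].
  { intros eps He. destruct (H (eps/2)) as [N HN]; [lra|]. exists N. intros n m Hn Hm.
    replace (Cminus (u n) (u m)) with (Cminus (Cminus (u n) S) (Cminus (u m) S)) by ring.
    eapply Rle_trans. unfold Cminus at 1. apply Cmod_triangle. rewrite Cmod_opp.
    pose proof (HN n Hn) as A1; pose proof (HN m Hm) as A2; lra. }
  symmetry. eapply Ccv_unique; eauto. Qed.

Open Scope R_scope.

Definition has_sum {I} (f : I -> C) (S : C) := forall eps, 0 < eps -> exists l0 : list I,
  forall l, NoDup l -> incl l0 l -> Cmod (Cminus (lsum f l) S) <= eps.
Definition summable {I} (f : I -> C) := exists M, forall l, NoDup l -> rsum (fun x => Cmod (f x)) l <= M.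

Lemma le_eps a b : (forall d, 0 < d -> a <= b + d) -> a <= b.
Proof. intros H. destruct (Rle_dec a b); auto. specialize (H ((a-b)/2)). lra. Qed.

Lemma inv_small eps : 0 < eps -> exists N, / INR (S N) <= eps.
Proof. intros He. destruct (archimed (/ eps)) as [H1 _].
  assert (0 < IZR (up (/eps))) by (pose proof (Rinv_0_lt_compat _ He); lra).
  exists (Z.to_nat (up (/ eps))). rewrite S_INR, INR_IZR_INZ, Z2Nat.id by (apply le_IZR; lra).
  rewrite <- (Rinv_inv eps) at 2. apply Rinv_le_contravar. apply Rinv_0_lt_compat; lra. lra. Qed.

Lemma Cmod_tri3 (a b c : C) : Cmod (Cminus a c) <= Cmod (Cminus a b) + Cmod (Cminus b c).
Proof. replace (Cminus a c) with (Cplus (Cminus a b) (Cminus b c)) by ring. apply Cmod_triangle. Qed.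
Lemma Cmod_sym (a b : C) : Cmod (Cminus a b) = Cmod (Cminus b a).
Proof. replace (Cminus a b) with (Copp (Cminus b a)) by ring. apply Cmod_opp. Qed.

Lemma NoDup_list_prod {A B} (l1 : list A) (l2 : list B) : NoDup l1 -> NoDup l2 -> NoDup (list_prod l1 l2).
Proof. intros H1 H2. induction H1; simpl. constructor.
 apply NoDup_app; auto. apply NoDup_map_in; auto. intros a b _ _ E; inversion E; auto.
 intros p Hp Hq. apply in_map_iff in Hp. destruct Hp as [y [<- _]]. apply in_prod_iff in Hq. tauto. Qed.

Lemma lsum_prod {A B} (a : A -> C) (b : B -> C) l1 l2 :
  lsum (fun p => Cmult (a (fst p)) (b (snd p))) (list_prod l1 l2) = Cmult (lsum a l1) (lsum b l2).
Proof. induction l1; simpl. ring. rewrite lsum_app, IHl1, lsum_map. simpl. rewrite lsum_scal. ring. Qed.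
Lemma rsum_prod {A B} (a : A -> R) (b : B -> R) l1 l2 :
  rsum (fun p => a (fst p) * b (snd p)) (list_prod l1 l2) = rsum a l1 * rsum b l2.
Proof. induction l1; simpl. ring. rewrite rsum_app, IHl1, rsum_map. simpl. rewrite rsum_scal. ring. Qed.
Lemma lsum_prod2 {A B} (f : A * B -> C) l1 l2 :
  lsum f (list_prod l1 l2) = lsum (fun x => lsum (fun y => f (x, y)) l2) l1.
Proof. induction l1; simpl. auto. rewrite lsum_app, IHl1, lsum_map. auto. Qed.

Lemma rsum_filter_zero {I} f (p : I -> bool) l :
  (forall x, In x l -> p x = false -> f x = 0) -> rsum f l = rsum f (filter p l).
Proof. induction l; simpl; intros H; auto. destruct (p a) eqn:E; simpl; rewrite IHl; auto.
  rewrite H; auto. ring. Qed.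

Lemma has_sum_ext {I} (f g : I -> C) S : (forall x, f x = g x) -> has_sum f S -> has_sum g S.
Proof. intros E H eps He. destruct (H eps He) as [l0 Hl]. exists l0. intros l H1 H2.
  rewrite (lsum_ext g f) by auto. auto. Qed.
Lemma has_sum_plus {I} (f g : I -> C) S T : has_sum f S -> has_sum g T -> has_sum (fun x => Cplus (f x) (g x)) (Cplus S T).
Proof. intros Hf Hg eps He. destruct (Hf (eps/2)) as [l1 H1]; [lra|]. destruct (Hg (eps/2)) as [l2 H2]; [lra|].
  exists (l1 ++ l2). intros l Hl Hi. rewrite lsum_plus.
  replace (Cminus (Cplus (lsum f l) (lsum g l)) (Cplus S T)) with (Cplus (Cminus (lsum f l) S) (Cminus (lsum g l) T)) by ring.
  eapply Rle_trans. apply Cmod_triangle.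
  assert (incl l1 l) by (intros x Hx; apply Hi, in_or_app; auto).
  assert (incl l2 l) by (intros x Hx; apply Hi, in_or_app; auto).
  specialize (H1 l Hl H). specialize (H2 l Hl H0). lra. Qed.
Lemma has_sum_scal {I} (f : I -> C) c S : has_sum f S -> has_sum (fun x => Cmult c (f x)) (Cmult c S).
Proof. intros Hf eps He. destruct (Hf (eps / (Cmod c + 1))) as [l1 H1].
  { apply Rdiv_lt_0_compat; auto. pose proof (Cmod_ge_0 c); lra. }
  exists l1. intros l Hl Hi. rewrite lsum_scal.
  replace (Cminus (Cmult c (lsum f l)) (Cmult c S)) with (Cmult c (Cminus (lsum f l) S)) by ring.
  rewrite Cmod_mult. specialize (H1 l Hl Hi). pose proof (Cmod_ge_0 c).
  pose proof (Cmod_ge_0 (Cminus (lsum f l) S)).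
  apply Rle_trans with (Cmod c * (eps / (Cmod c + 1))). apply Rmult_le_compat_l; auto.
  rewrite <- (Rmult_1_r eps) at 2. unfold Rdiv. rewrite <- Rmult_assoc, (Rmult_comm (Cmod c)), Rmult_assoc.
  apply Rmult_le_compat_l. lra. apply Rmult_le_reg_r with (Cmod c + 1). lra.
  rewrite Rmult_assoc, Rinv_l by lra. lra. Qed.
Lemma has_sum_zero {I} : has_sum (fun _ : I => RtoC 0) (RtoC 0).
Proof. intros eps He. exists nil. intros l _ _. rewrite lsum_zero by auto.
  replace (Cminus 0 0) with (RtoC 0) by ring. rewrite Cmod_0. lra. Qed.

Section HS.
Context {I : Type} (dec : forall x y : I, {x = y} + {x <> y}).
Definition inb (l : list I) (x : I) : bool := if in_dec dec x l then true else false.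

Lemma split_incl l0 l : NoDup l0 -> NoDup l -> incl l0 l ->
  Permutation l (l0 ++ filter (fun x => negb (inb l0 x)) l).
Proof.
  intros H0 H1 Hi. apply NoDup_Permutation; auto.
  - apply NoDup_app; auto. apply NoDup_filter; auto.
    intros a Ha Hb. apply filter_In in Hb. destruct Hb as [_ Hb]. unfold inb in Hb.
    destruct (in_dec dec a l0); simpl in Hb; congruence.
  - intros x; rewrite in_app_iff, filter_In. unfold inb. destruct (in_dec dec x l0); simpl; intuition.
Qed.

Lemma rest_props l0 l : NoDup l -> NoDup (filter (fun x => negb (inb l0 x)) l) /\
   forall x, In x (filter (fun x => negb (inb l0 x)) l) -> ~ In x l0.
Proof. intros H; split. apply NoDup_filter; auto.
  intros x Hx. apply filter_In in Hx. destruct Hx as [_ Hx]. unfold inb in Hx.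
  destruct (in_dec dec x l0); simpl in Hx; congruence. Qed.

Lemma lsum_incl (f : I -> C) l0 l : NoDup l0 -> NoDup l -> incl l0 l ->
  lsum f l = Cplus (lsum f l0) (lsum f (filter (fun x => negb (inb l0 x)) l)).
Proof. intros; rewrite <- lsum_app. apply lsum_perm, split_incl; auto. Qed.
Lemma rsum_incl (f : I -> R) l0 l : NoDup l0 -> NoDup l -> incl l0 l ->
  rsum f l = rsum f l0 + rsum f (filter (fun x => negb (inb l0 x)) l).
Proof. intros; rewrite <- rsum_app. apply rsum_perm, split_incl; auto. Qed.
Lemma rsum_incl_le (f : I -> R) l0 l : (forall x, 0 <= f x) -> NoDup l0 -> NoDup l -> incl l0 l -> rsum f l0 <= rsum f l.
Proof. intros Hf H0 H1 Hi. rewrite (rsum_incl f l0 l) by auto. pose proof (rsum_nonneg f (filter (fun x => negb (inb l0 x)) l) Hf). lra. Qed.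

Lemma has_sum_unique (f : I -> C) S T : has_sum f S -> has_sum f T -> S = T.
Proof. intros HS HT. apply Cmod_small_eq. intros eps He.
  destruct (HS (eps/2)) as [l1 H1]; [lra|]. destruct (HT (eps/2)) as [l2 H2]; [lra|].
  set (l := nodup dec (l1 ++ l2)).
  assert (Hn : NoDup l) by apply NoDup_nodup.
  assert (i1 : incl l1 l) by (intros x Hx; apply nodup_In, in_or_app; auto).
  assert (i2 : incl l2 l) by (intros x Hx; apply nodup_In, in_or_app; auto).
  specialize (H1 l Hn i1). specialize (H2 l Hn i2).
  eapply Rle_trans. apply (Cmod_tri3 _ (lsum f l)). rewrite Cmod_sym. lra. Qed.

Lemma tail (f : I -> C) : summable f -> forall eps, 0 < eps -> exists l0, NoDup l0 /\
  forall l, NoDup l -> (forall x, In x l -> ~ In x l0) -> rsum (fun x => Cmod (f x)) l <= eps.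
Proof.
  intros [M HM] eps He.
  set (E := fun r => exists l, NoDup l /\ r = rsum (fun x => Cmod (f x)) l).
  destruct (completeness E) as [m [Hub Hlub]].
  { exists M. intros r [l [Hl ->]]. auto. }
  { exists 0. exists nil. split. constructor. reflexivity. }
  destruct (classic (exists l0, NoDup l0 /\ m - eps < rsum (fun x => Cmod (f x)) l0)) as [[l0 [Hl0 Hlt]]|Hno].
  - exists l0; split; auto. intros l Hl Hdis.
    assert (Hnd : NoDup (l0 ++ l)) by (apply NoDup_app; auto; intros a Ha Hb; exact (Hdis a Hb Ha)).
    assert (rsum (fun x => Cmod (f x)) (l0 ++ l) <= m) by (apply Hub; exists (l0 ++ l); auto).
    rewrite rsum_app in H. lra.
  - exfalso. assert (m <= m - eps); [|lra]. apply Hlub. intros r [l [Hl ->]].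
    destruct (Rle_dec (rsum (fun x => Cmod (f x)) l) (m - eps)); auto.
    exfalso; apply Hno; exists l; split; auto; lra.
Qed.

Lemma summable_has_sum (f : I -> C) : summable f -> exists S, has_sum f S.
Proof.
  intros Hs.
  assert (Ht : forall n : nat, exists l0, NoDup l0 /\
    forall l, NoDup l -> (forall x, In x l -> ~ In x l0) -> rsum (fun x => Cmod (f x)) l <= / INR (S n)).
  { intros n. apply tail; auto. apply Rinv_0_lt_compat, lt_0_INR; lia. }
  set (tl := fun n => proj1_sig (constructive_indefinite_description _ (Ht n))).
  assert (Htl : forall n, NoDup (tl n) /\ forall l, NoDup l -> (forall x, In x l -> ~ In x (tl n)) -> rsum (fun x => Cmod (f x)) l <= / INR (S n)).
  { intros n. exact (proj2_sig (constructive_indefinite_description _ (Ht n))). }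
  clearbody tl.
  set (Lacc := fix Lacc n := match n with O => tl O | S m => nodup dec (Lacc m ++ tl (S m)) end).
  assert (HLn : forall n, NoDup (Lacc n)).
  { intros [|n]; simpl. apply Htl. apply NoDup_nodup. }
  assert (HLt : forall n, incl (tl n) (Lacc n)).
  { intros [|n] x Hx; simpl; auto. apply nodup_In, in_or_app; auto. }
  assert (HLm : forall m n, (m <= n)%nat -> incl (Lacc m) (Lacc n)).
  { intros m n Hmn. induction Hmn. apply incl_refl. intros x Hx. simpl. apply nodup_In, in_or_app; auto. }
  assert (Key : forall n l, NoDup l -> incl (Lacc n) l -> Cmod (Cminus (lsum f l) (lsum f (Lacc n))) <= / INR (S n)).
  { intros n l Hl Hi. rewrite (lsum_incl f (Lacc n) l) by auto.
    replace (Cminus (Cplus (lsum f (Lacc n)) (lsum f (filter (fun x => negb (inb (Lacc n) x)) l))) (lsum f (Lacc n)))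
      with (lsum f (filter (fun x => negb (inb (Lacc n) x)) l)) by ring.
    eapply Rle_trans. apply Cmod_lsum. destruct (rest_props (Lacc n) l Hl) as [R1 R2].
    apply Htl; auto. intros x Hx Hx'. apply (R2 x Hx). apply HLt; auto. }
  set (u := fun n => lsum f (Lacc n)).
  destruct (C_cauchy_lim u) as [Sm [HS _]].
  { intros eps He. destruct (inv_small (eps/2)) as [N HN]; [lra|]. exists N. intros n m Hn Hm.
    eapply Rle_trans. apply (Cmod_tri3 _ (u N)). rewrite (Cmod_sym (u N)).
    pose proof (Key N (Lacc n) (HLn n) (HLm _ _ Hn)). pose proof (Key N (Lacc m) (HLn m) (HLm _ _ Hm)).
    unfold u. lra. }
  exists Sm. intros eps He. destruct (inv_small (eps/2)) as [N HN]; [lra|].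
  assert (HuS : Cmod (Cminus (u N) Sm) <= / INR (S N)).
  { apply le_eps. intros d Hd. destruct (HS d Hd) as [M HM].
    eapply Rle_trans. apply (Cmod_tri3 _ (u (N + M)%nat)).
    rewrite Cmod_sym. pose proof (Key N (Lacc (N+M)%nat) (HLn _) (HLm N (N+M)%nat ltac:(lia))).
    pose proof (HM (N+M)%nat ltac:(lia)). unfold u in *. lra. }
  exists (Lacc N). intros l Hl Hi. eapply Rle_trans. apply (Cmod_tri3 _ (u N)).
  pose proof (Key N l Hl Hi). unfold u in *. lra.
Qed.
End HS.

Open Scope R_scope.

Lemma has_sum_reindex {I J} (decJ : forall x y : J, {x = y} + {x <> y})
  (F : J -> C) (f : I -> C) (g : J -> I) (h : I -> J) S :
  (forall j, F j <> RtoC 0 -> h (g j) = j /\ f (g j) = F j) ->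
  (forall i, f i <> RtoC 0 -> g (h i) = i /\ F (h i) = f i) ->
  has_sum F S -> has_sum f S.
Proof.
  intros H1 H2 HF eps He. destruct (HF eps He) as [l0' Hl0'].
  exists (map g (filter (fun j => nz (F j)) l0')). intros l Hl Hi.
  set (lf := filter (fun i => nz (f i)) l).
  set (m := map h lf ++ nodup decJ (filter (fun j => negb (nz (F j))) l0')).
  assert (Hlf : forall i, In i lf -> In i l /\ f i <> RtoC 0).
  { intros i Hi'. apply filter_In in Hi'. destruct Hi'. split; auto. apply nz_true; auto. }
  assert (Heq : lsum f l = lsum F m).
  { unfold m. rewrite lsum_app. rewrite (lsum_zero F (nodup _ _)).
    2:{ intros j Hj. apply nodup_In, filter_In in Hj. destruct Hj as [_ Hj].
        destruct (nz (F j)) eqn:E; simpl in Hj; try discriminate. apply nz_false; auto. }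
    rewrite lsum_map. rewrite (lsum_filter_zero f (fun i => nz (f i)) l).
    2:{ intros x _ Hx. apply nz_false; auto. }
    fold lf. rewrite (lsum_ext (fun x => F (h x)) f). ring.
    intros x Hx. apply H2. apply Hlf; auto. }
  rewrite Heq. apply Hl0'.
  - unfold m. apply NoDup_app.
    + apply NoDup_map_in. apply NoDup_filter; auto.
      intros x y Hx Hy Hxy. destruct (Hlf x Hx) as [_ Hx']. destruct (Hlf y Hy) as [_ Hy'].
      destruct (H2 x Hx') as [Ex _]. destruct (H2 y Hy') as [Ey _]. congruence.
    + apply NoDup_nodup.
    + intros a Ha Hb. apply in_map_iff in Ha. destruct Ha as [x [<- Hx]].
      apply nodup_In, filter_In in Hb. destruct Hb as [_ Hb].
      destruct (Hlf x Hx) as [_ Hx']. destruct (H2 x Hx') as [_ E].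
      destruct (nz (F (h x))) eqn:Ez; simpl in Hb; try discriminate.
      apply nz_false in Ez. congruence.
  - intros j Hj. unfold m. apply in_or_app.
    destruct (nz (F j)) eqn:Ez.
    + left. apply nz_true in Ez. destruct (H1 j Ez) as [E1 E2].
      apply in_map_iff. exists (g j). split; auto. apply filter_In. split.
      apply Hi. apply in_map_iff. exists j; split; auto. apply filter_In; split; auto. apply nz_true; auto.
      apply nz_true. congruence.
    + right. apply nodup_In, filter_In. rewrite Ez. auto.
Qed.

Lemma summable_reindex {I J} (F : J -> C) (f : I -> C) (g : J -> I) (h : I -> J) :
  (forall i, f i <> RtoC 0 -> g (h i) = i /\ F (h i) = f i) ->
  summable F -> summable f.
Proof.
  intros H2 [M HM]. exists M. intros l Hl.
  rewrite (rsum_filter_zero _ (fun i => nz (f i)) l).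
  2:{ intros x _ Hx. apply nz_false in Hx. rewrite Hx. apply Cmod_0. }
  set (lf := filter (fun i => nz (f i)) l).
  assert (Hlf : forall i, In i lf -> In i l /\ f i <> RtoC 0).
  { intros i Hi'. apply filter_In in Hi'. destruct Hi'. split; auto. apply nz_true; auto. }
  rewrite (rsum_ext _ (fun x => Cmod (F (h x)))).
  2:{ intros x Hx. destruct (H2 x (proj2 (Hlf x Hx))) as [_ E]. rewrite E; auto. }
  rewrite <- (rsum_map (fun x => Cmod (F x)) h). apply HM. apply NoDup_map_in. apply NoDup_filter; auto.
  intros x y Hx Hy Hxy. destruct (Hlf x Hx) as [_ Hx']. destruct (Hlf y Hy) as [_ Hy'].
  destruct (H2 x Hx') as [Ex _]. destruct (H2 y Hy') as [Ey _]. congruence.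
Qed.

Lemma summable_le {I} (f g : I -> C) c : (forall x, Cmod (f x) <= c * Cmod (g x)) -> summable g -> summable f.
Proof. intros H [M HM]. exists (Rabs c * M). intros l Hl.
  apply Rle_trans with (rsum (fun x => Rabs c * Cmod (g x)) l).
  apply rsum_le. intros x. eapply Rle_trans. apply H. apply Rmult_le_compat_r. apply Cmod_ge_0. apply Rle_abs.
  rewrite rsum_scal. apply Rmult_le_compat_l. apply Rabs_pos. auto. Qed.

Definition prod_dec {A B} (dA : forall x y : A, {x = y} + {x <> y}) (dB : forall x y : B, {x = y} + {x <> y}) :
  forall x y : A * B, {x = y} + {x <> y}.
Proof. intros [a b] [c d]. destruct (dA a c); destruct (dB b d); subst; auto; right; intros E; inversion E; auto. Defined.

Section Prod.
Context {I J : Type} (decI : forall x y : I, {x = y} + {x <> y}) (decJ : forall x y : J, {x = y} + {x <> y}).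

Lemma summable_prod (a : I -> C) (b : J -> C) : summable a -> summable b ->
  summable (fun p => Cmult (a (fst p)) (b (snd p))).
Proof.
  intros [Ma HMa] [Mb HMb]. exists (Ma * Mb). intros l Hl.
  set (L1 := nodup decI (map fst l)). set (L2 := nodup decJ (map snd l)).
  apply Rle_trans with (rsum (fun p => Cmod (Cmult (a (fst p)) (b (snd p)))) (list_prod L1 L2)).
  { apply (rsum_incl_le (prod_dec decI decJ)); auto.
    intros; apply Cmod_ge_0. apply NoDup_list_prod; apply NoDup_nodup.
    intros [x y] Hxy. apply in_prod_iff. split; apply nodup_In; apply in_map_iff; exists (x,y); auto. }
  rewrite (rsum_ext _ (fun p => Cmod (a (fst p)) * Cmod (b (snd p)))) by (intros; apply Cmod_mult).
  rewrite (rsum_prod (fun x => Cmod (a x)) (fun y => Cmod (b y))). assert (HA := HMa L1 (NoDup_nodup _ _)). assert (HB := HMb L2 (NoDup_nodup _ _)).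
  assert (0 <= rsum (fun x => Cmod (a x)) L1) by (apply rsum_nonneg; intros; apply Cmod_ge_0).
  assert (0 <= rsum (fun x => Cmod (b x)) L2) by (apply rsum_nonneg; intros; apply Cmod_ge_0).
  apply Rmult_le_compat; auto.
Qed.

Lemma Cmod_prod_err (x y A B : C) d : 0 <= d <= 1 -> Cmod (Cminus x A) <= d -> Cmod (Cminus y B) <= d ->
  Cmod (Cminus (Cmult x y) (Cmult A B)) <= d * (Cmod A + Cmod B + 1).
Proof. intros Hd Hx Hy.
  replace (Cminus (Cmult x y) (Cmult A B)) with (Cplus (Cmult x (Cminus y B)) (Cmult B (Cminus x A))) by ring.
  eapply Rle_trans. apply Cmod_triangle. rewrite !Cmod_mult.
  assert (Cmod x <= Cmod A + d).
  { replace x with (Cplus A (Cminus x A)) by ring. eapply Rle_trans. apply Cmod_triangle. lra. }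
  pose proof (Cmod_ge_0 x). pose proof (Cmod_ge_0 B). pose proof (Cmod_ge_0 (Cminus y B)). pose proof (Cmod_ge_0 (Cminus x A)).
  apply Rle_trans with ((Cmod A + d) * d + Cmod B * d).
  apply Rplus_le_compat; apply Rmult_le_compat; auto; lra. nra. Qed.

Lemma has_sum_prod (a : I -> C) (b : J -> C) A B : summable a -> summable b -> has_sum a A -> has_sum b B ->
  has_sum (fun p => Cmult (a (fst p)) (b (snd p))) (Cmult A B).
Proof.
  intros Sa Sb HA HB.
  destruct (summable_has_sum (prod_dec decI decJ) _ (summable_prod a b Sa Sb)) as [S HS].
  replace (Cmult A B) with S; auto.
  apply Cmod_small_eq. intros eps He.
  set (K := Cmod A + Cmod B + 2).
  assert (HK : 0 < K) by (unfold K; pose proof (Cmod_ge_0 A); pose proof (Cmod_ge_0 B); lra).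
  set (d := Rmin 1 (eps / K)).
  assert (Hd : 0 < d) by (unfold d; apply Rmin_glb_lt; [lra| apply Rdiv_lt_0_compat; auto]).
  assert (Hd1 : d <= 1) by apply Rmin_l. assert (Hd2 : d <= eps / K) by apply Rmin_r.
  destruct (HS d Hd) as [l0 H0]. destruct (HA d Hd) as [l1 H1]. destruct (HB d Hd) as [l2 H2].
  set (L1 := nodup decI (l1 ++ map fst l0)). set (L2 := nodup decJ (l2 ++ map snd l0)).
  assert (N1 : NoDup L1) by apply NoDup_nodup. assert (N2 : NoDup L2) by apply NoDup_nodup.
  specialize (H0 (list_prod L1 L2) (NoDup_list_prod _ _ N1 N2)).
  specialize (H1 L1 N1). specialize (H2 L2 N2).
  rewrite lsum_prod in H0.
  assert (E1 : Cmod (Cminus (lsum a L1) A) <= d) by (apply H1; intros x Hx; apply nodup_In, in_or_app; auto).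
  assert (E2 : Cmod (Cminus (lsum b L2) B) <= d) by (apply H2; intros x Hx; apply nodup_In, in_or_app; auto).
  assert (E0 : Cmod (Cminus (Cmult (lsum a L1) (lsum b L2)) S) <= d).
  { apply H0. intros [x y] Hxy. apply in_prod_iff. split; apply nodup_In, in_or_app; right;
    apply in_map_iff; exists (x,y); auto. }
  pose proof (Cmod_prod_err _ _ A B d ltac:(lra) E1 E2).
  eapply Rle_trans. apply (Cmod_tri3 _ (Cmult (lsum a L1) (lsum b L2))). rewrite Cmod_sym.
  apply Rle_trans with (d * K). unfold K; lra.
  apply Rle_trans with (eps / K * K). apply Rmult_le_compat_r; lra.
  unfold Rdiv. rewrite Rmult_assoc, Rinv_l; lra.
Qed.
End Prod.

Open Scope R_scope.

Lemma sum_n_lsum (u : nat -> C) N : @sum_n C_AbelianMonoid u N = lsum u (seq 0 (S N)).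
Proof. induction N.
  - rewrite sum_O. simpl. ring.
  - rewrite sum_Sn, IHN. rewrite (seq_S (S N)), lsum_app. simpl. change (plus ?a ?b) with (Cplus a b). ring.
Qed.

Lemma in_le_max (l : list nat) x : In x l -> (x <= fold_right max 0%nat l)%nat.
Proof. induction l; simpl; intros H. contradiction. destruct H; subst; [lia|]. specialize (IHl H); lia. Qed.

Lemma has_sum_nat_cv (f : nat -> C) S : has_sum f S -> Ccv (fun N => @sum_n C_AbelianMonoid f N) S.
Proof. intros H eps He. destruct (H eps He) as [l0 H0]. exists (fold_right max 0%nat l0).
  intros n Hn. rewrite sum_n_lsum. apply H0. apply seq_NoDup.
  intros x Hx. apply in_seq. pose proof (in_le_max l0 x Hx). lia. Qed.

Definition zr (N : nat) : list Z := map (fun i => (Z.of_nat i - Z.of_nat N)%Z) (seq 0 (S (2 * N))).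
Lemma zr_In N c : In c (zr N) <-> (- Z.of_nat N <= c <= Z.of_nat N)%Z.
Proof. unfold zr. rewrite in_map_iff. split.
  - intros [i [<- Hi]]. apply in_seq in Hi. lia.
  - intros Hc. exists (Z.to_nat (c + Z.of_nat N)). split. lia. apply in_seq. lia. Qed.
Lemma zr_NoDup N : NoDup (zr N).
Proof. unfold zr. apply NoDup_map_in. apply seq_NoDup. intros; lia. Qed.

Lemma box_lsum (f : Z * Z -> C) N :
  @sum_n C_AbelianMonoid (fun i => @sum_n C_AbelianMonoid (fun j => f ((Z.of_nat i - Z.of_nat N)%Z, (Z.of_nat j - Z.of_nat N)%Z)) (2 * N)) (2 * N)
  = lsum f (list_prod (zr N) (zr N)).
Proof. rewrite lsum_prod2. unfold zr. rewrite lsum_map, sum_n_lsum. apply lsum_ext. intros i _.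
  rewrite sum_n_lsum. rewrite lsum_map. auto. Qed.

Lemma has_sum_box_cv (f : Z * Z -> C) S : has_sum f S ->
  Ccv (fun N => @sum_n C_AbelianMonoid (fun i => @sum_n C_AbelianMonoid (fun j => f ((Z.of_nat i - Z.of_nat N)%Z, (Z.of_nat j - Z.of_nat N)%Z)) (2 * N)) (2 * N)) S.
Proof. intros H eps He. destruct (H eps He) as [l0 H0].
  exists (fold_right max 0%nat (map (fun p => max (Z.abs_nat (fst p)) (Z.abs_nat (snd p))) l0)).
  intros n Hn. rewrite box_lsum. apply H0. apply NoDup_list_prod; apply zr_NoDup.
  intros [c d] Hx. apply in_prod_iff.
  assert (Hm := in_le_max _ _ (in_map (fun p => max (Z.abs_nat (fst p)) (Z.abs_nat (snd p))) _ _ Hx)).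
  simpl in Hm. split; apply zr_In; lia. Qed.

Lemma Eis_val r2 e1 e2 k z s S :
  has_sum (fun p => eis_term r2 e1 e2 k z s (fst p) (snd p)) S ->
  Eis r2 e1 e2 k z s = Cmult (RtoC (/ 2)) S.
Proof. intros H. unfold Eis. f_equal. apply lim_C.
  apply has_sum_box_cv in H. unfold eis_partial. exact H. Qed.

Lemma Lfun_val s (f : Z -> C) V :
  has_sum (fun n : nat => Cmult (f (Z.of_nat (S n))) (Cinv (cpowR (INR (S n)) s))) V -> Lfun s f = V.
Proof. intros H. unfold Lfun. apply lim_C. apply has_sum_nat_cv in H. exact H. Qed.

Open Scope R_scope.

Lemma exp_le x y : x <= y -> exp x <= exp y.
Proof. intros [H|H]. left; apply exp_increasing; auto. subst; lra. Qed.

Definition pw (x a : R) := exp (a * ln x).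

Lemma pw_pos x a : 0 < pw x a.
Proof. apply exp_pos. Qed.

Lemma pw_step x t : 1 <= x -> 1 < t ->
  (t - 1) * pw (x + 1) (- t) <= pw x (1 - t) - pw (x + 1) (1 - t).
Proof.
  intros Hx Ht.
  destruct (MVT_gen (fun u => exp ((1 - t) * ln u)) x (x + 1) (fun u => (1 - t) * / u * exp ((1 - t) * ln u))) as [c [Hc Heq]].
  - intros u Hu. rewrite Rmin_left, Rmax_right in Hu by lra.
    auto_derive. lra. field. lra.
  - intros u Hu. rewrite Rmin_left, Rmax_right in Hu by lra.
    apply continuity_pt_filterlim. apply (@ex_derive_continuous R_AbsRing R_NormedModule (fun u => exp ((1 - t) * ln u))). auto_derive. lra.
  - rewrite Rmin_left, Rmax_right in Hc by lra.
    unfold pw. replace (x + 1 - x) with 1 in Heq by ring.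
    assert (E : (1 - t) * / c * exp ((1 - t) * ln c) = (1 - t) * exp (- t * ln c)).
    { replace ((1 - t) * ln c) with (- t * ln c + ln c) by ring. rewrite exp_plus, exp_ln by lra. field. lra. }
    rewrite E in Heq.
    assert (exp (- t * ln (x + 1)) <= exp (- t * ln c)).
    { apply exp_le. assert (ln c <= ln (x + 1)) by (apply ln_le; lra). nra. }
    nra.
Qed.

Lemma rsum_seq_S (f : nat -> R) N : rsum f (seq 0 (S (S N))) = rsum f (seq 0 (S N)) + f (S N).
Proof. rewrite (seq_S (S N)), rsum_app. simpl. ring. Qed.

Lemma zeta_partial t N : 1 < t ->
  rsum (fun n => pw (INR (S n)) (- t)) (seq 0 (S N)) <= 1 + (1 - pw (INR (S N)) (1 - t)) / (t - 1).
Proof. intros Ht. induction N.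
  - simpl. unfold pw. rewrite ln_1, !Rmult_0_r, exp_0. replace ((1-1)/(t-1)) with 0 by (field; lra). lra.
  - rewrite rsum_seq_S. pose proof (pw_step (INR (S N)) t).
    rewrite (S_INR (S N)). assert (1 <= INR (S N)) by (apply (le_INR 1); lia).
    specialize (H H0 Ht).
    apply Rle_trans with (1 + (1 - pw (INR (S N)) (1 - t)) / (t - 1) + (pw (INR (S N)) (1 - t) - pw (INR (S N) + 1) (1 - t)) / (t - 1)).
    apply Rplus_le_compat; auto. apply Rmult_le_reg_l with (t - 1). lra.
    replace ((t - 1) * ((pw (INR (S N)) (1 - t) - pw (INR (S N) + 1) (1 - t)) / (t - 1))) with (pw (INR (S N)) (1 - t) - pw (INR (S N) + 1) (1 - t)) by (field; lra). lra.
    right. field. lra.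
Qed.

Lemma zeta_summable t : 1 < t -> summable (fun n : nat => RtoC (pw (INR (S n)) (- t))).
Proof. intros Ht. exists (1 + 1 / (t - 1)). intros l Hl.
  set (N := fold_right max 0%nat l).
  apply Rle_trans with (rsum (fun x => Cmod (RtoC (pw (INR (S x)) (-t)))) (seq 0 (S N))).
  apply (rsum_incl_le Nat.eq_dec); auto. intros; apply Cmod_ge_0. apply seq_NoDup.
  intros x Hx. apply in_seq. pose proof (in_le_max l x Hx). unfold N. lia.
  rewrite (rsum_ext _ (fun n => pw (INR (S n)) (- t))).
  2:{ intros x _. rewrite Cmod_R. apply Rabs_pos_eq. left; apply pw_pos. }
  eapply Rle_trans. apply zeta_partial; auto. pose proof (pw_pos (INR (S N)) (1 - t)).
  apply Rplus_le_compat_l. unfold Rdiv. apply Rmult_le_compat_r. left; apply Rinv_0_lt_compat; lra. lra.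
Qed.

Open Scope R_scope.

Lemma cpowR_add x s t : cpowR x (Cplus s t) = Cmult (cpowR x s) (cpowR x t).
Proof. destruct s as [a b], t as [c d]. unfold cpowR. simpl.
  apply injective_projections; simpl;
  rewrite !Rmult_plus_distr_r, exp_plus; [rewrite cos_plus | rewrite sin_plus]; ring. Qed.

Lemma cpowR_mul x y s : 0 < x -> 0 < y -> cpowR (x * y) s = Cmult (cpowR x s) (cpowR y s).
Proof. intros Hx Hy. destruct s as [a b]. unfold cpowR. simpl. rewrite ln_mult by auto.
  apply injective_projections; simpl;
  rewrite !Rmult_plus_distr_l, exp_plus; [rewrite cos_plus | rewrite sin_plus]; ring. Qed.

Lemma cpowR_1 s : cpowR 1 s = RtoC 1.
Proof. unfold cpowR. rewrite ln_1, !Rmult_0_r, exp_0, cos_0, sin_0.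
  apply injective_projections; simpl; ring. Qed.

Lemma Cmod_cpowR x s : Cmod (cpowR x s) = pw x (Re s).
Proof. unfold cpowR, Cmod, pw. simpl.
  set (E := exp (Re s * ln x)). set (a := Im s * ln x).
  replace (E * cos a * (E * cos a * 1) + E * sin a * (E * sin a * 1)) with (E ^ 2 * ((sin a)² + (cos a)²)) by (unfold Rsqr; ring).
  rewrite sin2_cos2, Rmult_1_r. apply sqrt_pow2. left; apply exp_pos. Qed.

Lemma cpowR_nz x s : cpowR x s <> RtoC 0.
Proof. intros H. pose proof (Cmod_cpowR x s). rewrite H, Cmod_0 in H0. pose proof (pw_pos x (Re s)). lra. Qed.

Lemma cpowR_2s x s : cpowR x (Cmult (RtoC 2) s) = Cmult (cpowR x s) (cpowR x s).
Proof. replace (Cmult (RtoC 2) s) with (Cplus s s) by (apply injective_projections; simpl; ring).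
  apply cpowR_add. Qed.

Lemma cpowR_inv x s : 0 < x -> cpowR (/ x) s = Cinv (cpowR x s).
Proof. intros Hx. assert (H := cpowR_mul x (/ x) s Hx (Rinv_0_lt_compat _ Hx)).
  rewrite Rinv_r, cpowR_1 in H by lra. assert (Hn := cpowR_nz x s).
  transitivity (Cmult (Cinv (cpowR x s)) (Cmult (cpowR x s) (cpowR (/ x) s))).
  field. auto. rewrite <- H. ring. Qed.

Lemma Cmod_pow_n (u : C) n : Cmod (@pow_n C_Ring u n) = Cmod u ^ n.
Proof. induction n; simpl. apply Cmod_1. change (mult u (pow_n u n)) with (Cmult u (@pow_n C_Ring u n)).
  rewrite Cmod_mult, IHn. auto. Qed.

Lemma Cmod_cpowZ u k : Cmod u = 1 -> Cmod (cpowZ u k) = 1.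
Proof. intros H. unfold cpowZ. destruct (0 <=? k)%Z.
  - rewrite Cmod_pow_n, H, pow1. auto.
  - rewrite Cmod_inv. rewrite Cmod_pow_n, H, pow1. apply Rinv_1.
    intros E. apply (f_equal Cmod) in E. rewrite Cmod_pow_n, H, pow1, Cmod_0 in E. lra. Qed.

Lemma char_period q chi : dirichlet_char q chi -> forall m n, chi (n + q * m)%Z = chi n.
Proof. intros [Hq [H1 [Hm [Hp _]]]] m. pattern m. apply Z.peano_ind.
  - intros n. rewrite Z.mul_0_r, Z.add_0_r. auto.
  - intros m' IH n. replace (n + q * Z.succ m')%Z with ((n + q * m') + q)%Z by ring. rewrite Hp. auto.
  - intros m' IH n. rewrite <- (IH n).
    replace (n + q * m')%Z with ((n + q * Z.pred m') + q)%Z by (rewrite <- Z.sub_1_r; ring).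
    rewrite Hp. auto. Qed.

Lemma char_mod q chi : dirichlet_char q chi -> forall n, chi n = chi (n mod q)%Z.
Proof. intros Hc n. rewrite (Z_div_mod_eq_full n q) at 1.
  rewrite Z.add_comm. apply char_period; auto. Qed.

Lemma rsum_ge_term {I} (f : I -> R) l x : (forall y, 0 <= f y) -> In x l -> f x <= rsum f l.
Proof. intros Hf; induction l; simpl; intros H. contradiction. destruct H.
  subst. pose proof (rsum_nonneg f l Hf). lra. pose proof (Hf a). specialize (IHl H). lra. Qed.

Lemma char_bounded q chi : dirichlet_char q chi -> exists B, forall n, Cmod (chi n) <= B.
Proof. intros Hc. exists (rsum (fun r => Cmod (chi (Z.of_nat r))) (seq 0 (Z.to_nat q))).
  intros n. rewrite (char_mod q chi Hc n). destruct Hc as [Hq _].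
  assert (0 <= n mod q < q)%Z by (apply Z.mod_pos_bound; lia).
  replace (n mod q)%Z with (Z.of_nat (Z.to_nat (n mod q))) by lia.
  apply (rsum_ge_term (fun r => Cmod (chi (Z.of_nat r)))). intros; apply Cmod_ge_0.
  apply in_seq. lia. Qed.

Lemma bernoulli t m : 0 <= t -> 1 + INR m * t <= (1 + t) ^ m.
Proof. intros Ht. induction m. simpl; lra. rewrite S_INR. simpl.
  assert (0 <= INR m) by apply pos_INR. nra. Qed.

Lemma char_le1 q chi : dirichlet_char q chi -> forall n, Cmod (chi n) <= 1.
Proof. intros Hc n. destruct (char_bounded q chi Hc) as [B HB].
  destruct Hc as [Hq [H1 [Hm _]]].
  assert (Hpow : forall m : nat, Cmod (chi (n ^ Z.of_nat m)%Z) = Cmod (chi n) ^ m).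
  { induction m. simpl. rewrite H1, Cmod_1. auto.
    rewrite Nat2Z.inj_succ, Z.pow_succ_r by lia. rewrite Hm, Cmod_mult, IHm. simpl. auto. }
  destruct (Rle_dec (Cmod (chi n)) 1) as [|Hgt]; auto. exfalso.
  set (t := Cmod (chi n) - 1). assert (Ht : 0 < t) by (unfold t; lra).
  destruct (archimed (B / t)) as [Ha _].
  pose proof (HB 0%Z) as HB0. pose proof (Cmod_ge_0 (chi 0%Z)).
  set (m := Z.to_nat (up (B / t))).
  assert (Hm' : B / t < INR m).
  { unfold m. rewrite INR_IZR_INZ, Z2Nat.id. auto. apply le_IZR. assert (0 <= B / t) by (apply Rdiv_le_0_compat; lra). lra. }
  pose proof (bernoulli t m (Rlt_le _ _ Ht)). assert (E1 : 1 + t = Cmod (chi n)) by (unfold t; ring). rewrite E1 in H0.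
  rewrite <- Hpow in H0. specialize (HB (n ^ Z.of_nat m)%Z).
  assert (B < INR m * t). { apply Rmult_lt_reg_r with (/ t). apply Rinv_0_lt_compat; auto.
    rewrite Rmult_assoc, Rinv_r by lra. rewrite Rmult_1_r. exact Hm'. }
  lra. Qed.

Open Scope R_scope.

Definition wv (r : Z) (z : C) (c d : Z) : C := Cplus (Cmult (RtoC (IZR (c * r))) z) (RtoC (IZR d)).

Definition body (r : Z) (e1 e2 : Z -> C) (k : Z) (z s : C) (c d : Z) : C :=
  Cmult (Cmult (Cmult (cpowR (IZR r * Im z) s) (Cmult (e1 c) (e2 d)))
               (Cinv (cpowR (Cmod (wv r z c d)) (Cmult (RtoC 2) s))))
        (cpowZ (Cdiv (RtoC (Cmod (wv r z c d))) (wv r z c d)) k).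

Lemma eis_term_body r e1 e2 k z s c d :
  eis_term r e1 e2 k z s c d = if (Z.gcd c d =? 1)%Z then body r e1 e2 k z s c d else RtoC 0.
Proof. reflexivity. Qed.

Definition tfull (r : Z) (e1 e2 : Z -> C) (k : Z) (z s : C) (p : Z * Z) : C :=
  if ((fst p =? 0) && (snd p =? 0))%Z%bool then RtoC 0 else body r e1 e2 k z s (fst p) (snd p).

Lemma quad_lb x y u d : 0 < y ->
  y ^ 2 / (1 + x ^ 2 + y ^ 2) * (u ^ 2 + d ^ 2) <= (u * x + d) ^ 2 + (u * y) ^ 2.
Proof. intros Hy. assert (HT : 0 < 1 + x ^ 2 + y ^ 2) by nra.
  apply Rmult_le_reg_l with (1 + x ^ 2 + y ^ 2); auto.
  replace ((1 + x ^ 2 + y ^ 2) * (y ^ 2 / (1 + x ^ 2 + y ^ 2) * (u ^ 2 + d ^ 2))) with (y ^ 2 * (u ^ 2 + d ^ 2)) by (field; lra).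
  assert (E : (1 + x ^ 2 + y ^ 2) * ((u * x + d) ^ 2 + (u * y) ^ 2) - y ^ 2 * (u ^ 2 + d ^ 2)
     = (u * x + d) ^ 2 + ((x ^ 2 + y ^ 2) * u + x * d) ^ 2) by ring.
  pose proof (pow2_ge_0 (u * x + d)). pose proof (pow2_ge_0 ((x ^ 2 + y ^ 2) * u + x * d)). lra. Qed.

Lemma int_lb (c d : Z) : ~ (c = 0 /\ d = 0)%Z -> ((Z.abs c + 1) * (Z.abs d + 1) <= 4 * (c * c + d * d))%Z.
Proof. intros H. destruct (Z.abs_spec c) as [[? ->]|[? ->]]; destruct (Z.abs_spec d) as [[? ->]|[? ->]]; nia. Qed.

Lemma Cmod2_wv r z c d : Cmod (wv r z c d) ^ 2 = (IZR (c * r) * Re z + IZR d) ^ 2 + (IZR (c * r) * Im z) ^ 2.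
Proof. unfold Cmod. rewrite pow2_sqrt. unfold wv. destruct z; simpl. ring.
  unfold wv; destruct z; simpl. rewrite !Rmult_1_r. apply Rplus_le_le_0_compat; apply Rle_0_sqr. Qed.

Definition kap (z : C) := Im z ^ 2 / (1 + Re z ^ 2 + Im z ^ 2) / 4.

Lemma kap_pos z : 0 < Im z -> 0 < kap z.
Proof. intros H. unfold kap. apply Rdiv_lt_0_compat; [|lra]. apply Rdiv_lt_0_compat; nra. Qed.

Lemma wv_lb r z c d : 0 < Im z -> (1 <= r)%Z -> ~ (c = 0 /\ d = 0)%Z ->
  kap z * (IZR (Z.abs c + 1) * IZR (Z.abs d + 1)) <= Cmod (wv r z c d) ^ 2.
Proof. intros Hy Hr Hcd. rewrite Cmod2_wv.
  eapply Rle_trans; [|apply quad_lb; auto].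
  assert (H1 : IZR (Z.abs c + 1) * IZR (Z.abs d + 1) <= 4 * (IZR c * IZR c + IZR d * IZR d)).
  { rewrite <- !mult_IZR, <- plus_IZR, <- mult_IZR. apply IZR_le, int_lb; auto. }
  assert (H2 : IZR c * IZR c <= (IZR c * IZR r) * (IZR c * IZR r)).
  { rewrite <- !mult_IZR. apply IZR_le. assert (0 <= c*c)%Z by nia. assert (1 <= r*r)%Z by nia. replace (c * r * (c * r))%Z with ((c*c)*(r*r))%Z by ring. nia. }
  rewrite mult_IZR.
  assert (HT : 0 < Im z ^ 2 / (1 + Re z ^ 2 + Im z ^ 2)) by (apply Rdiv_lt_0_compat; nra).
  unfold kap. set (T := Im z ^ 2 / (1 + Re z ^ 2 + Im z ^ 2)) in *.
  apply Rle_trans with (T * (IZR c * IZR c + IZR d * IZR d)).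
  { apply Rmult_le_reg_r with 4. lra. replace (T / 4 * (IZR (Z.abs c + 1) * IZR (Z.abs d + 1)) * 4) with (T * (IZR (Z.abs c + 1) * IZR (Z.abs d + 1))) by (field).
    rewrite Rmult_assoc. apply Rmult_le_compat_l; lra. }
  apply Rmult_le_compat_l. lra. simpl. pose proof (Rle_0_sqr (IZR d)). unfold Rsqr in *. lra. Qed.

Lemma wv_nz r z c d : 0 < Im z -> (1 <= r)%Z -> ~ (c = 0 /\ d = 0)%Z -> wv r z c d <> RtoC 0.
Proof. intros Hy Hr Hcd E. pose proof (wv_lb r z c d Hy Hr Hcd). rewrite E, Cmod_0 in H.
  pose proof (kap_pos z Hy). assert (0 < IZR (Z.abs c + 1)) by (apply IZR_lt; lia).
  assert (0 < IZR (Z.abs d + 1)) by (apply IZR_lt; lia). assert (0 < kap z * (IZR (Z.abs c + 1) * IZR (Z.abs d + 1))) by (apply Rmult_lt_0_compat; [|apply Rmult_lt_0_compat]; auto). rewrite pow_i in H by lia. lra. Qed.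

Open Scope R_scope.

Definition aZ (sg : R) (c : Z) : R := pw (IZR (Z.abs c + 1)) (- sg).

Definition gz (n : nat) : Z := let m := Z.of_nat n in if (m mod 2 =? 0)%Z then (m / 2)%Z else (- ((m + 1) / 2))%Z.
Definition hz (c : Z) : nat := Z.to_nat (if (c >=? 0)%Z then 2 * c else - 2 * c - 1)%Z.

Lemma gz_hz c : gz (hz c) = c.
Proof. unfold gz, hz. destruct (c >=? 0)%Z eqn:E.
  - apply Z.geb_le in E. rewrite Z2Nat.id by lia.
    destruct ((2 * c) mod 2 =? 0)%Z eqn:E2; [apply Z.eqb_eq in E2 | apply Z.eqb_neq in E2]; Z.div_mod_to_equations; lia.
  - assert (c < 0)%Z by (destruct (Z.geb_spec c 0); [discriminate| lia]). rewrite Z2Nat.id by lia.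
    destruct ((- 2 * c - 1) mod 2 =? 0)%Z eqn:E2; [apply Z.eqb_eq in E2 | apply Z.eqb_neq in E2]; Z.div_mod_to_equations; lia.
Qed.

Lemma gz_bound n : (Z.of_nat n + 1 <= 2 * (Z.abs (gz n) + 1))%Z.
Proof. unfold gz. destruct (Z.of_nat n mod 2 =? 0)%Z eqn:E2; [apply Z.eqb_eq in E2 | apply Z.eqb_neq in E2]; Z.div_mod_to_equations; lia. Qed.

Lemma pw_mono x y a : 0 < x -> x <= y -> a <= 0 -> pw y a <= pw x a.
Proof. intros Hx Hxy Ha. unfold pw. apply exp_le. assert (ln x <= ln y) by (apply ln_le; auto). nra. Qed.

Lemma pw_mult x y a : 0 < x -> 0 < y -> pw (x * y) a = pw x a * pw y a.
Proof. intros. unfold pw. rewrite ln_mult, Rmult_plus_distr_l, exp_plus; auto. Qed.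

Lemma aZ_summable sg : 1 < sg -> summable (fun c => RtoC (aZ sg c)).
Proof. intros Hs.
  apply (summable_reindex (fun n => RtoC (aZ sg (gz n))) _ gz hz).
  { intros i _. rewrite gz_hz. auto. }
  apply (summable_le _ (fun n : nat => RtoC (pw (INR (S n)) (- sg))) (pw (/ 2) (- sg))); [|apply zeta_summable; auto].
  intros n. rewrite !Cmod_R, !Rabs_pos_eq by (left; apply pw_pos).
  unfold aZ. rewrite <- pw_mult by (first [apply Rinv_0_lt_compat; lra | apply lt_0_INR; lia]).
  apply pw_mono; try lra. apply Rmult_lt_0_compat. lra. apply lt_0_INR; lia.
  rewrite S_INR, INR_IZR_INZ. pose proof (gz_bound n). apply IZR_le in H. rewrite mult_IZR, !plus_IZR in H.
  rewrite plus_IZR. simpl in *. lra.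
Qed.

Lemma Cmod_div_self (w : C) : w <> RtoC 0 -> Cmod (Cdiv (RtoC (Cmod w)) w) = 1.
Proof. intros H. rewrite Cmod_div by auto. rewrite Cmod_R, Rabs_pos_eq by apply Cmod_ge_0.
  unfold Rdiv. apply Rinv_r. apply Cmod_gt_0 in H. lra. Qed.

Lemma body_bound r e1 e2 k z s c d : 0 < Im z -> (1 <= r)%Z -> 1 < Re s ->
  (forall n, Cmod (e1 n) <= 1) -> (forall n, Cmod (e2 n) <= 1) -> ~ (c = 0 /\ d = 0)%Z ->
  Cmod (body r e1 e2 k z s c d) <= (pw (IZR r * Im z) (Re s) * pw (kap z) (- Re s)) * (aZ (Re s) c * aZ (Re s) d).
Proof.
  intros Hy Hr Hs He1 He2 Hcd.
  assert (Hw := wv_nz r z c d Hy Hr Hcd). set (w := wv r z c d) in *.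
  assert (Hwp : 0 < Cmod w) by (apply Cmod_gt_0; auto).
  unfold body. fold w. rewrite !Cmod_mult, Cmod_cpowZ, Cmod_inv, !Cmod_cpowR by (auto using Cmod_div_self, cpowR_nz).
  rewrite Rmult_1_r.
  assert (Hre : Re (Cmult (RtoC 2) s) = 2 * Re s) by (destruct s; unfold Re; simpl; ring). rewrite Hre.
  pose proof (pw_pos (IZR r * Im z) (Re s)).
  assert (E : / pw (Cmod w) (2 * Re s) <= pw (kap z) (- Re s) * (aZ (Re s) c * aZ (Re s) d)).
  { unfold aZ, pw. rewrite <- !exp_plus, <- exp_Ropp. apply exp_le.
    assert (HA : 0 < IZR (Z.abs c + 1)) by (apply IZR_lt; lia).
    assert (HB : 0 < IZR (Z.abs d + 1)) by (apply IZR_lt; lia).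
    assert (Hk := kap_pos z Hy).
    assert (L : ln (kap z * (IZR (Z.abs c + 1) * IZR (Z.abs d + 1))) <= ln (Cmod w ^ 2)).
    { apply ln_le. apply Rmult_lt_0_compat; auto. apply Rmult_lt_0_compat; auto. apply wv_lb; auto. }
    rewrite ln_pow in L by auto. rewrite !ln_mult in L by (auto; apply Rmult_lt_0_compat; auto).
    simpl in L. nra. }
  assert (0 <= Cmod (e1 c) * Cmod (e2 d) <= 1).
  { pose proof (Cmod_ge_0 (e1 c)). pose proof (Cmod_ge_0 (e2 d)). specialize (He1 c). specialize (He2 d). split. nra. nra. }
  assert (0 < / pw (Cmod w) (2 * Re s)) by (apply Rinv_0_lt_compat, pw_pos).
  apply Rle_trans with (pw (IZR r * Im z) (Re s) * 1 * / pw (Cmod w) (2 * Re s)).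
  { apply Rmult_le_compat_r. lra. apply Rmult_le_compat_l; lra. }
  rewrite Rmult_1_r, Rmult_assoc. apply Rmult_le_compat_l; lra.
Qed.

Lemma tfull_summable r e1 e2 k z s : 0 < Im z -> (1 <= r)%Z -> 1 < Re s ->
  (forall n, Cmod (e1 n) <= 1) -> (forall n, Cmod (e2 n) <= 1) -> summable (tfull r e1 e2 k z s).
Proof. intros Hy Hr Hs He1 He2.
  apply (summable_le _ (fun p => Cmult (RtoC (aZ (Re s) (fst p))) (RtoC (aZ (Re s) (snd p))))
     (pw (IZR r * Im z) (Re s) * pw (kap z) (- Re s))).
  - intros [c d]. unfold tfull. simpl fst; simpl snd.
    rewrite Cmod_mult, !Cmod_R, !Rabs_pos_eq by (left; apply pw_pos).
    destruct ((c =? 0)%Z && (d =? 0)%Z)%bool eqn:E.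
    + rewrite Cmod_0. pose proof (pw_pos (IZR r * Im z) (Re s)). pose proof (pw_pos (kap z) (- Re s)).
      unfold aZ. pose proof (pw_pos (IZR (Z.abs c + 1)) (- Re s)). pose proof (pw_pos (IZR (Z.abs d + 1)) (- Re s)).
      apply Rmult_le_pos; apply Rmult_le_pos; lra.
    + apply body_bound; auto. intros [-> ->]. simpl in E. discriminate.
  - apply (summable_prod Z.eq_dec Z.eq_dec (fun c => RtoC (aZ (Re s) c)) (fun c => RtoC (aZ (Re s) c))); apply aZ_summable; auto.
Qed.

Lemma ecop_summable r e1 e2 k z s : 0 < Im z -> (1 <= r)%Z -> 1 < Re s ->
  (forall n, Cmod (e1 n) <= 1) -> (forall n, Cmod (e2 n) <= 1) ->
  summable (fun p => eis_term r e1 e2 k z s (fst p) (snd p)).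
Proof. intros. apply (summable_le _ (tfull r e1 e2 k z s) 1); [|apply tfull_summable; auto].
  intros [c d]. simpl. rewrite eis_term_body. unfold tfull. simpl.
  destruct (Z.gcd c d =? 1)%Z eqn:E.
  - apply Z.eqb_eq in E. destruct ((c =? 0)%Z && (d =? 0)%Z)%bool eqn:E2.
    + apply Bool.andb_true_iff in E2. destruct E2 as [E3 E4]. apply Z.eqb_eq in E3, E4. subst. discriminate.
    + lra.
  - rewrite Cmod_0. pose proof (Cmod_ge_0 (if ((c =? 0)%Z && (d =? 0)%Z)%bool then RtoC 0 else body r e1 e2 k z s c d)). lra.
Qed.

Open Scope R_scope.

Lemma wv_scale r z m c d : wv r z (m * c) (m * d) = Cmult (RtoC (IZR m)) (wv r z c d).
Proof. unfold wv. rewrite !mult_IZR. destruct z. apply injective_projections; simpl; ring. Qed.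

Definition mcoef (e1 e2 : Z -> C) (s : C) (m : Z) : C :=
  Cmult (Cmult (e1 m) (e2 m)) (Cinv (cpowR (IZR m) (Cmult (RtoC 2) s))).

Lemma body_scale r e1 e2 k z s m c d : (0 < m)%Z -> 0 < Im z -> (1 <= r)%Z -> ~ (c = 0 /\ d = 0)%Z ->
  (forall a b, e1 (a * b)%Z = Cmult (e1 a) (e1 b)) -> (forall a b, e2 (a * b)%Z = Cmult (e2 a) (e2 b)) ->
  body r e1 e2 k z s (m * c) (m * d) = Cmult (mcoef e1 e2 s m) (body r e1 e2 k z s c d).
Proof.
  intros Hm Hy Hr Hcd M1 M2. unfold body, mcoef. rewrite wv_scale, M1, M2.
  assert (Hw := wv_nz r z c d Hy Hr Hcd). set (w := wv r z c d) in *.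
  assert (Hwp : 0 < Cmod w) by (apply Cmod_gt_0; auto).
  assert (HmR : 0 < IZR m) by (apply IZR_lt; auto).
  assert (Em : Cmod (Cmult (RtoC (IZR m)) w) = IZR m * Cmod w).
  { rewrite Cmod_mult, Cmod_R, Rabs_pos_eq; lra. }
  rewrite Em. rewrite (cpowR_mul (IZR m) (Cmod w)) by auto.
  assert (Eq : Cdiv (RtoC (IZR m * Cmod w)) (Cmult (RtoC (IZR m)) w) = Cdiv (RtoC (Cmod w)) w).
  { rewrite RtoC_mult. field. split; auto. intros E. apply (f_equal fst) in E. simpl in E. lra. }
  rewrite Eq.
  assert (N1 := cpowR_nz (IZR m) (Cmult (RtoC 2) s)). assert (N2 := cpowR_nz (Cmod w) (Cmult (RtoC 2) s)).
  field. split; auto.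
Qed.

Lemma pw_inv x a : / pw x a = pw x (- a).
Proof. unfold pw. rewrite <- exp_Ropp. f_equal. ring. Qed.

Definition lser (e1 e2 : Z -> C) (s : C) (n : nat) : C :=
  Cmult (Cmult (e1 (Z.of_nat (S n))) (e2 (Z.of_nat (S n)))) (Cinv (cpowR (INR (S n)) (Cmult (RtoC 2) s))).

Lemma lser_summable e1 e2 s : 1 < Re s -> (forall n, Cmod (e1 n) <= 1) -> (forall n, Cmod (e2 n) <= 1) ->
  summable (lser e1 e2 s).
Proof. intros Hs H1 H2.
  apply (summable_le _ (fun n : nat => RtoC (pw (INR (S n)) (- (2 * Re s)))) 1); [|apply zeta_summable; lra].
  intros n. unfold lser. rewrite !Cmod_mult, Cmod_inv, Cmod_cpowR by apply cpowR_nz.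
  rewrite Cmod_R, Rabs_pos_eq by (left; apply pw_pos). rewrite Rmult_1_l.
  assert (Hre : Re (Cmult (RtoC 2) s) = 2 * Re s) by (destruct s; unfold Re; simpl; ring). rewrite Hre, pw_inv.
  pose proof (pw_pos (INR (S n)) (- (2 * Re s))).
  pose proof (Cmod_ge_0 (e1 (Z.of_nat (S n)))). pose proof (Cmod_ge_0 (e2 (Z.of_nat (S n)))).
  specialize (H1 (Z.of_nat (S n))). specialize (H2 (Z.of_nat (S n))).
  assert (Cmod (e1 (Z.of_nat (S n))) * Cmod (e2 (Z.of_nat (S n))) <= 1) by nra. nra. Qed.

Lemma lser_mcoef e1 e2 s n : lser e1 e2 s n = mcoef e1 e2 s (Z.of_nat (S n)).
Proof. unfold lser, mcoef. rewrite INR_IZR_INZ. auto. Qed.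

Lemma fact1 r e1 e2 k z s Lv Sc : 0 < Im z -> (1 <= r)%Z -> 1 < Re s ->
  (forall n, Cmod (e1 n) <= 1) -> (forall n, Cmod (e2 n) <= 1) ->
  (forall a b, e1 (a * b)%Z = Cmult (e1 a) (e1 b)) -> (forall a b, e2 (a * b)%Z = Cmult (e2 a) (e2 b)) ->
  has_sum (lser e1 e2 s) Lv ->
  has_sum (fun p => eis_term r e1 e2 k z s (fst p) (snd p)) Sc ->
  has_sum (tfull r e1 e2 k z s) (Cmult Lv Sc).
Proof.
  intros Hy Hr Hs B1 B2 M1 M2 HL HS.
  pose proof (has_sum_prod Nat.eq_dec (prod_dec Z.eq_dec Z.eq_dec) _ _ _ _
      (lser_summable e1 e2 s Hs B1 B2) (ecop_summable r e1 e2 k z s Hy Hr Hs B1 B2) HL HS) as HP.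
  simpl in HP.
  refine (has_sum_reindex (prod_dec Nat.eq_dec (prod_dec Z.eq_dec Z.eq_dec)) _ _
    (fun j => (Z.of_nat (S (fst j)) * fst (snd j), Z.of_nat (S (fst j)) * snd (snd j))%Z)
    (fun i => let G := Z.gcd (fst i) (snd i) in (pred (Z.to_nat G), (fst i / G, snd i / G))%Z)
    _ _ _ HP).
  - intros [n [c d]] HF. cbn [fst snd] in HF |- *.
    rewrite eis_term_body in HF |- *.
    destruct (Z.gcd c d =? 1)%Z eqn:Eg; [|exfalso; apply HF; ring].
    apply Z.eqb_eq in Eg.
    assert (Hcd : ~ (c = 0 /\ d = 0)%Z) by (intros [-> ->]; simpl in Eg; discriminate).
    set (m := Z.of_nat (S n)).
    assert (Hm : (0 < m)%Z) by (unfold m; lia).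
    rewrite Z.gcd_mul_mono_l_nonneg, Eg by lia. split.
    + f_equal. unfold m; lia. f_equal; rewrite Z.mul_comm, Z.mul_1_r, Z.div_mul; lia.
    + unfold tfull. cbn [fst snd]. destruct ((m * c =? 0)%Z && (m * d =? 0)%Z)%bool eqn:E0.
      { exfalso. apply Bool.andb_true_iff in E0. destruct E0 as [E3 E4]. apply Z.eqb_eq in E3, E4. apply Hcd. nia. }
      rewrite body_scale by auto. rewrite lser_mcoef. auto.
  - intros [c d] Hf. unfold tfull in Hf. cbn [fst snd] in Hf |- *.
    destruct ((c =? 0)%Z && (d =? 0)%Z)%bool eqn:E0; [exfalso; apply Hf; auto|].
    assert (Hcd : ~ (c = 0 /\ d = 0)%Z).
    { intros [-> ->]. simpl in E0. discriminate. }
    set (G := Z.gcd c d).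
    assert (HG : (0 < G)%Z).
    { unfold G. pose proof (Z.gcd_nonneg c d). destruct (Z.eq_dec (Z.gcd c d) 0) as [E|E]; [|lia].
      apply Z.gcd_eq_0 in E. tauto. }
    destruct (Z.gcd_divide_l c d) as [c' Hc']. destruct (Z.gcd_divide_r c d) as [d' Hd']. fold G in Hc', Hd'.
    assert (Ec : (c / G = c')%Z) by (rewrite Hc'; apply Z.div_mul; lia).
    assert (Ed : (d / G = d')%Z) by (rewrite Hd'; apply Z.div_mul; lia).
    rewrite Ec, Ed.
    assert (ES : Z.of_nat (S (pred (Z.to_nat G))) = G) by lia.
    rewrite ES.
    assert (Hg1 : Z.gcd c' d' = 1%Z).
    { rewrite <- Ec, <- Ed. apply Z.gcd_div_gcd; unfold G; lia. }
    assert (Hcd' : ~ (c' = 0 /\ d' = 0)%Z) by (intros [-> ->]; simpl in Hg1; discriminate).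
    split.
    + f_equal; lia.
    + rewrite eis_term_body, Hg1. simpl. unfold tfull. cbn [fst snd]. rewrite E0.
      clearbody G. subst c d. rewrite (Z.mul_comm c' G), (Z.mul_comm d' G).
      rewrite body_scale by auto. rewrite lser_mcoef, ES. auto.
Qed.

Module Mob.
Import ssreflect ssrbool ssrnat eqtype seq prime div path.

Lemma size_length {T} (s : list T) : size s = length s.
Proof. by elim: s => //= x s ->. Qed.

Lemma mu_p_dvd p d : prime p -> (0 < d)%N -> (p %| d) -> moebius_nat (p * d) = 0%Z.
Proof.
  move=> pp d0 pd. rewrite /moebius_nat.
  have p0 : (0 < p)%N by apply: prime_gt0.
  case E: (all _ _) => //.
  have Hp : p \in primes (p * d) by rewrite mem_primes pp muln_gt0 p0 d0 dvdn_mulr.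
  move/allP: E => /(_ p Hp). rewrite lognM // logn_prime // eqxx.
  have : (0 < logn p d)%N by rewrite logn_gt0 mem_primes pp d0 pd.
  case: (logn p d) => //.
Qed.

Lemma mu_p_ndvd p d : prime p -> (0 < d)%N -> ~~ (p %| d) -> moebius_nat (p * d) = (- moebius_nat d)%Z.
Proof.
  move=> pp d0 npd. rewrite /moebius_nat.
  have p0 : (0 < p)%N by apply: prime_gt0.
  have Hperm : perm_eq (primes (p * d)) (p :: primes d).
  { apply: uniq_perm. apply: primes_uniq. rewrite /= primes_uniq andbT mem_primes pp d0 /= npd //.
    move=> q. rewrite primesM // primes_prime // in_cons. rewrite in_cons in_nil orbF. done. }
  rewrite (perm_all _ Hperm) -!size_length (perm_size Hperm).
  change (size (p :: primes d)) with (S (size (primes d))).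
  change (all ?P (p :: ?s)) with (P p && all P s).
cbv beta.   rewrite lognM // logn_prime // eqxx (@logn_coprime p d) ?prime_coprime //.
  have -> : all (fun q => Nat.eqb (logn q (p * d)) 1) (primes d) = all (fun q => Nat.eqb (logn q d) 1) (primes d).
  { apply: eq_in_all => q Hq. rewrite lognM // logn_prime //.
    have : q != p. { apply/eqP => Eq. subst q. move: Hq. rewrite mem_primes pp d0 /=. by rewrite (negbTE npd). }
    by move/negbTE => ->. }
  case: (all _ _) => //. rewrite Nat2Z.inj_succ Z.pow_succ_r //. lia.
Qed.

Lemma gauss_p p n m : prime p -> (n %| p * m) -> ~~ (p %| n) -> (n %| m).
Proof. move=> pp H npn. rewrite -(Gauss_dvdr m (_ : coprime n p)) //. by rewrite coprime_sym prime_coprime. Qed.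

Lemma dvdn_iff d m : (d %| m) = true <-> Nat.divide d m.
Proof. split. by move/dvdnP => [k ->]; exists k. move=> [k ->]. apply/dvdnP. by exists k. Qed.

Lemma pdiv_facts g : (1 < g)%N -> prime (pdiv g) /\ (pdiv g %| g) /\ (1 < pdiv g)%N.
Proof. move=> H. split; first by apply: pdiv_prime. split; first by apply: pdiv_dvd.
  apply: prime_gt1. by apply: pdiv_prime. Qed.

Lemma mu1 : moebius_nat 1 = 1%Z.
Proof. reflexivity. Qed.
Lemma mu_p_dvd' p d : prime p -> (0 < d)%coq_nat -> Nat.divide p d -> moebius_nat (Nat.mul p d) = 0%Z.
Proof. move=> pp /ltP d0 /dvdn_iff pd. exact: mu_p_dvd. Qed.
Lemma mu_p_ndvd' p d : prime p -> (0 < d)%coq_nat -> ~ Nat.divide p d -> moebius_nat (Nat.mul p d) = (- moebius_nat d)%Z.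
Proof. move=> pp /ltP d0 npd. apply: mu_p_ndvd => //. apply/negP => /dvdn_iff. done. Qed.
Lemma gauss_p' p n m : prime p -> Nat.divide n (Nat.mul p m) -> ~ Nat.divide p n -> Nat.divide n m.
Proof. move=> pp /dvdn_iff H npn. apply/dvdn_iff. apply: gauss_p pp H _. apply/negP => /dvdn_iff. done. Qed.
Lemma pdiv_facts' g : (1 < g)%coq_nat -> prime (pdiv g) /\ Nat.divide (pdiv g) g /\ (1 < pdiv g)%coq_nat.
Proof. move=> /ltP H. have [A [B C]] := pdiv_facts g H. split => //. split. by apply/dvdn_iff. by apply/ltP. Qed.
End Mob.

Open Scope R_scope.
Definition divs (g : nat) : list nat := filter (fun n => Nat.eqb (g mod n) 0) (seq 1 g).

Lemma divs_In g n : (0 < g)%nat -> In n (divs g) <-> (0 < n)%nat /\ Nat.divide n g.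
Proof. intros Hg. unfold divs. rewrite filter_In, in_seq, Nat.eqb_eq. split.
  - intros [H1 H2]. split. lia. apply Nat.mod_divide; auto. lia.
  - intros [H1 H2]. split. pose proof (Nat.divide_pos_le n g Hg H2). lia. apply Nat.mod_divide; auto. lia. Qed.
Lemma divs_NoDup g : NoDup (divs g).
Proof. apply NoDup_filter, seq_NoDup. Qed.

Lemma rsum_zero {I} (f : I -> R) l : (forall x, In x l -> f x = 0) -> rsum f l = 0.
Proof. induction l; simpl; intros H; auto. rewrite H, IHl; auto. ring. Qed.

Lemma mob_sum g : (0 < g)%nat -> rsum (fun n => IZR (moebius_nat n)) (divs g) = if Nat.eqb g 1 then 1 else 0.
Proof.
  intros Hg. destruct (Nat.eq_dec g 1) as [->|Hg1].
  { simpl. rewrite Mob.mu1. ring. }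
  replace (Nat.eqb g 1) with false by (symmetry; apply Nat.eqb_neq; auto).
  destruct (Mob.pdiv_facts' g ltac:(lia)) as [pp [[m Hm] Hp1]].
  set (p := prime.pdiv g) in *.
  assert (Hm0 : (0 < m)%nat) by (destruct m; lia).
  set (isp := fun n => Nat.eqb (n mod p) 0).
  assert (Hisp : forall n, isp n = true <-> Nat.divide p n).
  { intros n. unfold isp. rewrite Nat.eqb_eq. apply Nat.mod_divide. lia. }
  assert (Hisp' : forall n, isp n = false <-> ~ Nat.divide p n).
  { intros n. rewrite <- Hisp. destruct (isp n); split; congruence. }
  rewrite (rsum_filter _ isp).
  assert (PA : Permutation (filter (fun x => negb (isp x)) (divs g)) (filter (fun x => negb (isp x)) (divs m))).
  { apply NoDup_Permutation; try (apply NoDup_filter, divs_NoDup).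
    intros n. rewrite !filter_In, !divs_In by auto.
    destruct (isp n) eqn:E; simpl. split; intros [_ H]; discriminate.
    apply Hisp' in E. split; intros [[H1 H2] _]; (split; [split|]; auto).
    - apply (Mob.gauss_p' p); auto. rewrite Nat.mul_comm, <- Hm. auto.
    - rewrite Hm. apply Nat.divide_mul_l. auto. }
  assert (PB : Permutation (filter isp (divs g)) (map (Nat.mul p) (divs m))).
  { apply NoDup_Permutation. apply NoDup_filter, divs_NoDup.
    apply NoDup_map_in. apply divs_NoDup. intros x y _ _ E. apply Nat.mul_cancel_l in E; lia.
    intros n. rewrite filter_In, divs_In, in_map_iff by auto. rewrite Hisp. split.
    - intros [[H1 H2] [e He]]. exists e. split. lia. apply divs_In; auto. split. destruct e; lia.
      subst n. rewrite Hm in H2. apply Nat.mul_divide_cancel_r in H2; auto. lia.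
    - intros [e [<- He]]. apply divs_In in He; auto. destruct He as [He1 He2]. split. split. nia.
      rewrite Hm, (Nat.mul_comm m p). apply Nat.mul_divide_mono_l. auto.
      apply Nat.divide_mul_l. apply Nat.divide_refl. }
  rewrite (rsum_perm _ _ _ PA), (rsum_perm _ _ _ PB), rsum_map.
  rewrite (rsum_ext _ (fun e => if isp e then 0 else - IZR (moebius_nat e))).
  2:{ intros e He. apply divs_In in He; auto. destruct He as [He1 _]. destruct (isp e) eqn:E.
      apply Hisp in E. rewrite Mob.mu_p_dvd'; auto.
      apply Hisp' in E. rewrite Mob.mu_p_ndvd'; auto. rewrite opp_IZR. auto. }
  rewrite (rsum_filter _ isp (divs m)).
  rewrite (rsum_zero _ (filter isp (divs m))).
  2:{ intros x Hx. apply filter_In in Hx. destruct Hx as [_ Hx]. rewrite Hx. auto. }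
  rewrite (rsum_ext _ (fun e => -1 * IZR (moebius_nat e)) (filter (fun x => negb (isp x)) (divs m))).
  2:{ intros x Hx. apply filter_In in Hx. destruct Hx as [_ Hx]. destruct (isp x); simpl in Hx; try discriminate. ring. }
  rewrite rsum_scal. ring.
Qed.

Open Scope R_scope.

Definition dcond (q : Z) (F : Z -> C) (n : nat) : C :=
  if ((0 <? Z.of_nat n) && (Z.rem q (Z.of_nat n) =? 0))%Z%bool then F (Z.of_nat n) else RtoC 0.

Lemma divsum_lsum q F : divsum q F = lsum (dcond q F) (seq 0 (S (Z.to_nat q))).
Proof. unfold divsum. rewrite sum_n_lsum. reflexivity. Qed.

Lemma divsum_ext q F G : (forall a, (0 < a)%Z -> Z.rem q a = 0%Z -> F a = G a) -> divsum q F = divsum q G.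
Proof. intros H. rewrite !divsum_lsum. apply lsum_ext. intros n _. unfold dcond.
  destruct ((0 <? Z.of_nat n)%Z && (Z.rem q (Z.of_nat n) =? 0)%Z)%bool eqn:E; auto.
  apply Bool.andb_true_iff in E. destruct E as [E1 E2]. apply Z.ltb_lt in E1. apply Z.eqb_eq in E2. auto. Qed.

Lemma divsum_scal q F X : divsum q (fun a => Cmult (F a) X) = Cmult (divsum q F) X.
Proof. rewrite !divsum_lsum. rewrite Cmult_comm, <- lsum_scal. apply lsum_ext. intros n _. unfold dcond.
  destruct (_ && _)%bool; ring. Qed.

Lemma divsum_zero q : divsum q (fun _ => RtoC 0) = RtoC 0.
Proof. rewrite divsum_lsum. apply lsum_zero. intros n _. unfold dcond. destruct (_ && _)%bool; auto. Qed.

Lemma has_sum_lsum {I J} (H : J -> I -> C) (V : J -> C) l :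
  (forall j, In j l -> has_sum (H j) (V j)) -> has_sum (fun x => lsum (fun j => H j x) l) (lsum V l).
Proof. induction l; simpl; intros Hh.
  - apply has_sum_zero.
  - apply has_sum_plus; auto. Qed.

Lemma has_sum_divsum {I} q (F : Z -> I -> C) (V : Z -> C) :
  (forall a, (0 < a)%Z -> Z.rem q a = 0%Z -> has_sum (F a) (V a)) ->
  has_sum (fun x => divsum q (fun a => F a x)) (divsum q V).
Proof. intros H. rewrite divsum_lsum.
  apply (has_sum_ext (fun x => lsum (fun n => dcond q (fun a => F a x) n) (seq 0 (S (Z.to_nat q))))).
  { intros x. rewrite divsum_lsum. auto. }
  apply has_sum_lsum. intros n _. unfold dcond.
  destruct ((0 <? Z.of_nat n)%Z && (Z.rem q (Z.of_nat n) =? 0)%Z)%bool eqn:E.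
  - apply Bool.andb_true_iff in E. destruct E as [E1 E2]. apply Z.ltb_lt in E1. apply Z.eqb_eq in E2. auto.
  - apply has_sum_zero. Qed.

Lemma lsum_RtoC {I} (f : I -> R) l : lsum (fun x => RtoC (f x)) l = RtoC (rsum f l).
Proof. induction l; simpl; auto. rewrite IHl. apply injective_projections; simpl; ring. Qed.

Lemma moebius_nat_Z n : (0 < n)%nat -> moebius (Z.of_nat n) = moebius_nat n.
Proof. intros H. unfold moebius. replace (0 <? Z.of_nat n)%Z with true by (symmetry; apply Z.ltb_lt; lia).
  rewrite Nat2Z.id. auto. Qed.

Lemma nat_Z_divide a b : Nat.divide a b <-> (Z.of_nat a | Z.of_nat b)%Z.
Proof. split.
  - intros [k ->]. exists (Z.of_nat k). lia.
  - intros [k Hk]. destruct a as [|a'].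
    + exists 0%nat. lia.
    + assert (0 <= k)%Z by nia. exists (Z.to_nat k). nia. Qed.

Lemma mobZ q c : (0 < q)%Z ->
  divsum q (fun a => if (Z.rem c a =? 0)%Z then RtoC (IZR (moebius a)) else RtoC 0)
  = if (Z.gcd c q =? 1)%Z then RtoC 1 else RtoC 0.
Proof.
  intros Hq. rewrite divsum_lsum.
  set (P := fun n : nat => ((0 <? Z.of_nat n) && (Z.rem q (Z.of_nat n) =? 0) && (Z.rem c (Z.of_nat n) =? 0))%Z%bool).
  rewrite (lsum_filter_zero _ P).
  2:{ intros n _ Hn. unfold dcond, P in *.
      destruct ((0 <? Z.of_nat n)%Z && (Z.rem q (Z.of_nat n) =? 0)%Z)%bool; auto.
      simpl in Hn. rewrite Hn. auto. }
  set (G := Z.to_nat (Z.gcd c q)).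
  assert (HG : (0 < G)%nat).
  { unfold G. assert (Z.gcd c q <> 0)%Z by (intros E; apply Z.gcd_eq_0 in E; lia). pose proof (Z.gcd_nonneg c q). lia. }
  assert (Hmem : forall n, In n (filter P (seq 0 (S (Z.to_nat q)))) <-> In n (divs G)).
  { intros n. rewrite filter_In, in_seq, divs_In by auto. unfold P.
    rewrite !Bool.andb_true_iff, Z.ltb_lt, !Z.eqb_eq.
    assert (EG : Z.of_nat G = Z.gcd c q) by (unfold G; rewrite Z2Nat.id; auto; apply Z.gcd_nonneg).
    split.
    - intros [_ [[H1 H2] H3]]. split. lia. apply nat_Z_divide. rewrite EG.
      apply Z.rem_divide in H2; [|lia]. apply Z.rem_divide in H3; [|lia]. apply Z.gcd_greatest; auto.
    - intros [H1 H2]. apply nat_Z_divide in H2. rewrite EG in H2.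
      assert (D1 : (Z.of_nat n | q)%Z) by (eapply Z.divide_trans; [apply H2| apply Z.gcd_divide_r]).
      assert (D2 : (Z.of_nat n | c)%Z) by (eapply Z.divide_trans; [apply H2| apply Z.gcd_divide_l]).
      split. pose proof (Z.divide_pos_le _ _ Hq D1). lia.
      split. split. lia. apply Z.rem_divide; auto; lia. apply Z.rem_divide; auto; lia. }
  assert (Hperm : Permutation (filter P (seq 0 (S (Z.to_nat q)))) (divs G)).
  { apply NoDup_Permutation; auto. apply NoDup_filter, seq_NoDup. apply divs_NoDup. }
  rewrite (lsum_ext _ (fun n => RtoC (IZR (moebius_nat n))) (filter P _)).
  2:{ intros n Hn. apply filter_In in Hn. destruct Hn as [_ Hn]. unfold P in Hn.
      apply Bool.andb_true_iff in Hn. destruct Hn as [Hn1 Hn2]. unfold dcond. rewrite Hn1. cbv beta iota. rewrite Hn2.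
      apply Bool.andb_true_iff in Hn1. destruct Hn1 as [Hn0 _]. apply Z.ltb_lt in Hn0.
      rewrite moebius_nat_Z; auto. lia. }
  rewrite (lsum_perm _ _ _ Hperm), lsum_RtoC, mob_sum by auto.
  destruct (Z.gcd c q =? 1)%Z eqn:E; [apply Z.eqb_eq in E | apply Z.eqb_neq in E]; unfold G.
  - rewrite E. reflexivity.
  - replace (Nat.eqb (Z.to_nat (Z.gcd c q)) 1) with false; auto. symmetry; apply Nat.eqb_neq. pose proof (Z.gcd_nonneg c q). lia.
Qed.

Open Scope R_scope.

Definition Phi (k : Z) (s : C) (w : C) : C :=
  Cmult (Cinv (cpowR (Cmod w) (Cmult (RtoC 2) s))) (cpowZ (Cdiv (RtoC (Cmod w)) w) k).

Lemma body_Phi r e1 e2 k z s c d :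
  body r e1 e2 k z s c d = Cmult (Cmult (cpowR (IZR r * Im z) s) (Cmult (e1 c) (e2 d))) (Phi k s (wv r z c d)).
Proof. unfold body, Phi. ring. Qed.

Lemma Phi_scale k s B w : 0 < B -> w <> RtoC 0 ->
  Phi k s (Cmult (RtoC B) w) = Cmult (Cinv (cpowR B (Cmult (RtoC 2) s))) (Phi k s w).
Proof. intros HB Hw. unfold Phi.
  assert (Hwp : 0 < Cmod w) by (apply Cmod_gt_0; auto).
  assert (Em : Cmod (Cmult (RtoC B) w) = B * Cmod w) by (rewrite Cmod_mult, Cmod_R, Rabs_pos_eq by lra; reflexivity).
  rewrite Em, (cpowR_mul B (Cmod w)) by auto.
  assert (Eq : Cdiv (RtoC (B * Cmod w)) (Cmult (RtoC B) w) = Cdiv (RtoC (Cmod w)) w).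
  { rewrite RtoC_mult. field. split; auto. intros E. apply (f_equal fst) in E. simpl in E. lra. }
  rewrite Eq.
  assert (N1 := cpowR_nz B (Cmult (RtoC 2) s)). assert (N2 := cpowR_nz (Cmod w) (Cmult (RtoC 2) s)).
  field. split; auto. Qed.

Definition zab (q2 qs2 a b : Z) (z : C) : C := Cmult (RtoC (IZR (a * q2) / IZR (b * qs2))) z.

Lemma Im_zab q2 qs2 a b z : Im (zab q2 qs2 a b z) = IZR (a * q2) / IZR (b * qs2) * Im z.
Proof. unfold zab. destruct z. unfold Im. simpl. ring. Qed.

Lemma wv_ab q2 qs2 a b z c' d' : (0 < a)%Z -> (0 < b)%Z -> (0 < qs2)%Z ->
  wv q2 z (a * c') (b * d') = Cmult (RtoC (IZR b)) (wv qs2 (zab q2 qs2 a b z) c' d').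
Proof. intros Ha Hb Hq. unfold wv, zab. rewrite !mult_IZR.
  assert (IZR a <> 0) by (apply not_0_IZR; lia). assert (IZR b <> 0) by (apply not_0_IZR; lia).
  assert (IZR qs2 <> 0) by (apply not_0_IZR; lia).
  destruct z as [x y]. apply injective_projections; simpl; field; auto. Qed.

Lemma cpow_identity q2 qs2 a b z s : (0 < a)%Z -> (0 < b)%Z -> (0 < q2)%Z -> (0 < qs2)%Z -> 0 < Im z ->
  Cmult (Cmult (Cinv (cpowR (IZR (a * b)) s)) (cpowR (IZR qs2 * Im (zab q2 qs2 a b z)) s)) (cpowR (IZR b) (Cmult (RtoC 2) s))
  = cpowR (IZR q2 * Im z) s.
Proof. intros Ha Hb Hq2 Hqs Hy. rewrite Im_zab, cpowR_2s.
  assert (HA : 0 < IZR a) by (apply IZR_lt; lia). assert (HB : 0 < IZR b) by (apply IZR_lt; lia).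
  assert (HQ : 0 < IZR q2) by (apply IZR_lt; lia). assert (HQs : 0 < IZR qs2) by (apply IZR_lt; lia).
  replace (IZR qs2 * (IZR (a * q2) / IZR (b * qs2) * Im z)) with (IZR a / IZR b * (IZR q2 * Im z)).
  2:{ rewrite !mult_IZR. field. lra. }
  assert (HY : 0 < IZR q2 * Im z) by nra.
  assert (HAB : 0 < IZR a / IZR b) by (apply Rdiv_lt_0_compat; auto).
  assert (E1 : cpowR (IZR a / IZR b * (IZR q2 * Im z)) s = Cmult (cpowR (IZR a / IZR b) s) (cpowR (IZR q2 * Im z) s)) by (apply cpowR_mul; auto).
  assert (E2 : cpowR (IZR a) s = Cmult (cpowR (IZR a / IZR b) s) (cpowR (IZR b) s)).
  { rewrite <- cpowR_mul by auto. f_equal. field. lra. }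
  assert (E3 : cpowR (IZR (a * b)) s = Cmult (cpowR (IZR a) s) (cpowR (IZR b) s)) by (rewrite mult_IZR; apply cpowR_mul; auto).
  rewrite E1, E3, E2.
  assert (N1 := cpowR_nz (IZR a / IZR b) s). assert (N2 := cpowR_nz (IZR b) s).
  field. split; auto. Qed.

Definition Gab (chis1 chis2 : Z -> C) (q2 qs2 k : Z) (z s : C) (a b : Z) (p : Z * Z) : C :=
  if ((Z.rem (fst p) a =? 0) && (Z.rem (snd p) b =? 0))%Z%bool then
    Cmult (Cmult (Cmult (chis1 a) (chis2 b)) (Cinv (cpowR (IZR (a * b)) s)))
          (tfull qs2 chis1 chis2 k (zab q2 qs2 a b z) s (fst p / a, snd p / b))%Z
  else RtoC 0.

Lemma Gab_val chis1 chis2 q2 qs2 k z s a b c d :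
  (0 < a)%Z -> (0 < b)%Z -> (0 < q2)%Z -> (0 < qs2)%Z -> 0 < Im z ->
  (forall m n, chis1 (m * n)%Z = Cmult (chis1 m) (chis1 n)) -> (forall m n, chis2 (m * n)%Z = Cmult (chis2 m) (chis2 n)) ->
  Z.rem c a = 0%Z -> Z.rem d b = 0%Z -> ~ (c = 0 /\ d = 0)%Z ->
  Gab chis1 chis2 q2 qs2 k z s a b (c, d) =
  Cmult (Cmult (cpowR (IZR q2 * Im z) s) (Cmult (chis1 c) (chis2 d))) (Phi k s (wv q2 z c d)).
Proof.
  intros Ha Hb Hq2 Hqs Hy M1 M2 Hc Hd Hcd.
  apply Z.rem_divide in Hc; [|lia]. apply Z.rem_divide in Hd; [|lia].
  destruct Hc as [c' ->]. destruct Hd as [d' ->].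
  unfold Gab. cbn [fst snd].
  rewrite !Z.rem_mul by lia. simpl. rewrite !Z.div_mul by lia.
  assert (Hcd' : ~ (c' = 0 /\ d' = 0)%Z) by (intros [-> ->]; apply Hcd; lia).
  unfold tfull. cbn [fst snd].
  destruct ((c' =? 0)%Z && (d' =? 0)%Z)%bool eqn:E0.
  { exfalso. apply Bool.andb_true_iff in E0. destruct E0 as [E3 E4]. apply Z.eqb_eq in E3, E4. auto. }
  assert (Hyab : 0 < Im (zab q2 qs2 a b z)).
  { rewrite Im_zab. apply Rmult_lt_0_compat; auto. apply Rdiv_lt_0_compat; apply IZR_lt; lia. }
  rewrite body_Phi. rewrite (Z.mul_comm c' a), (Z.mul_comm d' b).
  rewrite (wv_ab q2 qs2 a b z c' d') by auto.
  rewrite Phi_scale.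
  2:{ apply IZR_lt; lia. }
  2:{ apply wv_nz; auto. lia. }
  rewrite <- (cpow_identity q2 qs2 a b z s) by auto.
  rewrite !M1, !M2.
  assert (N := cpowR_nz (IZR b) (Cmult (RtoC 2) s)).
  field. split; auto. apply cpowR_nz.
Qed.

Lemma fact2_pt q1 q2 qs1 qs2 chi1 chi2 chis1 chis2 k z s c d :
  induced_by q1 chi1 qs1 chis1 -> induced_by q2 chi2 qs2 chis2 -> 0 < Im z ->
  tfull q2 chi1 chi2 k z s (c, d) =
  divsum q1 (fun a => divsum q2 (fun b => Cmult (Cmult (RtoC (IZR (moebius a))) (RtoC (IZR (moebius b))))
                                                (Gab chis1 chis2 q2 qs2 k z s a b (c, d)))).
Proof.
  intros [D1 [Ds1 [Dv1 I1]]] [D2 [Ds2 [Dv2 I2]]] Hy.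
  destruct D1 as [Hq1 _]. destruct D2 as [Hq2 _].
  destruct Ds1 as [Hqs1 [_ [M1 _]]]. destruct Ds2 as [Hqs2 [_ [M2 _]]].
  destruct (Z.eq_dec c 0) as [Ec|Ec]; destruct (Z.eq_dec d 0) as [Ed|Ed].
  { subst c d. unfold tfull. simpl.
    rewrite (divsum_ext q1 _ (fun _ => RtoC 0)). symmetry; apply divsum_zero.
    intros a Ha _. rewrite (divsum_ext q2 _ (fun _ => RtoC 0)). apply divsum_zero.
    intros b Hb _. unfold Gab. cbn [fst snd]. rewrite !Z.rem_0_l, !Z.div_0_l by lia. unfold tfull. simpl. ring. }
  all: assert (Hcd : ~ (c = 0 /\ d = 0)%Z) by lia.
  all: set (X := Cmult (Cmult (cpowR (IZR q2 * Im z) s) (Cmult (chis1 c) (chis2 d))) (Phi k s (wv q2 z c d))).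
  all: set (A := fun a => if (Z.rem c a =? 0)%Z then RtoC (IZR (moebius a)) else RtoC 0).
  all: set (B := fun b => if (Z.rem d b =? 0)%Z then RtoC (IZR (moebius b)) else RtoC 0).
  all: rewrite (divsum_ext q1 _ (fun a => Cmult (A a) (Cmult (divsum q2 B) X))).
  2,4,6: intros a Ha _; rewrite (divsum_ext q2 _ (fun b => Cmult (B b) (Cmult (A a) X)));
    [rewrite divsum_scal; ring|];
    intros b Hb _; unfold A, B;
    destruct (Z.rem c a =? 0)%Z eqn:Eca; destruct (Z.rem d b =? 0)%Z eqn:Edb;
    try (unfold Gab; cbn [fst snd]; rewrite Eca, Edb; simpl; ring);
    apply Z.eqb_eq in Eca; apply Z.eqb_eq in Edb; rewrite Gab_val by auto; unfold X; ring.
  all: rewrite divsum_scal; unfold A, B; rewrite !mobZ by auto.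
  all: unfold tfull; cbn [fst snd].
  all: replace ((c =? 0)%Z && (d =? 0)%Z)%bool with false by (symmetry; apply Bool.andb_false_iff; rewrite !Z.eqb_neq; lia).
  all: rewrite body_Phi, I1, I2; unfold X.
  all: destruct (Z.gcd c q1 =? 1)%Z; destruct (Z.gcd d q2 =? 1)%Z; cbv beta iota; ring.
Qed.

Open Scope R_scope.

Lemma Gab_has_sum chis1 chis2 q2 qs2 k z s a b T : (0 < a)%Z -> (0 < b)%Z ->
  has_sum (tfull qs2 chis1 chis2 k (zab q2 qs2 a b z) s) T ->
  has_sum (Gab chis1 chis2 q2 qs2 k z s a b)
          (Cmult (Cmult (Cmult (chis1 a) (chis2 b)) (Cinv (cpowR (IZR (a * b)) s))) T).
Proof.
  intros Ha Hb HT.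
  set (K := Cmult (Cmult (chis1 a) (chis2 b)) (Cinv (cpowR (IZR (a * b)) s))).
  pose proof (has_sum_scal _ K _ HT) as HS.
  refine (has_sum_reindex (prod_dec Z.eq_dec Z.eq_dec) _ _
     (fun j => (a * fst j, b * snd j)%Z) (fun i => (fst i / a, snd i / b)%Z) _ _ _ HS).
  - intros [c' d'] _. cbn [fst snd].
    assert (E1 : (a * c' / a = c')%Z) by (rewrite Z.mul_comm; apply Z.div_mul; lia).
    assert (E2 : (b * d' / b = d')%Z) by (rewrite Z.mul_comm; apply Z.div_mul; lia).
    rewrite E1, E2. split; auto.
    unfold Gab. cbn [fst snd].
    rewrite (Z.mul_comm a c'), (Z.mul_comm b d'), !Z.rem_mul by lia. simpl.
    rewrite !Z.div_mul by lia. reflexivity.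
  - intros [c d] Hf. unfold Gab in Hf |- *. cbn [fst snd] in Hf |- *.
    destruct ((Z.rem c a =? 0)%Z && (Z.rem d b =? 0)%Z)%bool eqn:E; [|exfalso; apply Hf; auto].
    apply Bool.andb_true_iff in E. destruct E as [E1 E2]. apply Z.eqb_eq in E1, E2.
    split; auto.
    apply Z.rem_divide in E1; [|lia]. apply Z.rem_divide in E2; [|lia].
    destruct E1 as [c' ->]. destruct E2 as [d' ->]. rewrite !Z.div_mul by lia.
    f_equal; ring.
Qed.

Lemma rsum_inv_sq N : rsum (fun n => / (INR (S n) * INR (S n))) (seq 1 (S N)) <= 3 / 4 - / INR (S (S N)).
Proof. induction N.
  - simpl rsum. replace (INR 2) with 2 by (simpl; lra). replace (INR 1) with 1 by (simpl; lra).
    replace (/ (2 * 2)) with (1/4) by field. replace (/ 2) with (1/2) by field. lra.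
  - rewrite (seq_S (S N)), rsum_app. change (rsum ?f (?a :: nil)) with (f a + 0). cbv beta.
    replace (1 + S N)%nat with (S (S N)) by lia.
    assert (H2 : 2 <= INR (S (S N))) by (rewrite !S_INR; pose proof (pos_INR N); lra).
    rewrite (S_INR (S (S N))).
    set (x := INR (S (S N))) in *.
    assert (/ ((x + 1) * (x + 1)) <= / x - / (x + 1)).
    { replace (/ x - / (x + 1)) with (/ (x * (x + 1))) by (field; lra).
      apply Rinv_le_contravar. nra. nra. }
    lra.
Qed.

Lemma pw_m2 x : 0 < x -> pw x (-2) = / (x * x).
Proof. intros Hx. unfold pw. replace (-2 * ln x) with (- (ln x + ln x)) by ring.
  rewrite exp_Ropp, exp_plus, exp_ln; auto. Qed.

Lemma L_nz e1 e2 s L : 1 < Re s -> (forall n, Cmod (e1 n) <= 1) -> (forall n, Cmod (e2 n) <= 1) ->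
  e1 1%Z = RtoC 1 -> e2 1%Z = RtoC 1 -> has_sum (lser e1 e2 s) L -> L <> RtoC 0.
Proof.
  intros Hs B1 B2 O1 O2 HL EL.
  assert (Hb : Cmod (Cminus L (RtoC 1)) <= 3 / 4).
  { apply le_eps. intros eps He. destruct (HL eps He) as [l0 H0].
    set (N := S (fold_right max 0%nat l0)).
    assert (Hin : incl l0 (seq 0 (S N))).
    { intros x Hx. apply in_seq. pose proof (in_le_max l0 x Hx). unfold N. lia. }
    specialize (H0 _ (seq_NoDup _ _) Hin).
    assert (Hsplit : lsum (lser e1 e2 s) (seq 0 (S N)) = Cplus (RtoC 1) (lsum (lser e1 e2 s) (seq 1 N))).
    { simpl. f_equal. unfold lser. simpl. rewrite O1, O2. replace (INR 1) with 1 by reflexivity. rewrite cpowR_1.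
      apply injective_projections; simpl; field. }
    rewrite Hsplit in H0.
    assert (Hr : Cmod (lsum (lser e1 e2 s) (seq 1 N)) <= 3 / 4).
    { eapply Rle_trans. apply Cmod_lsum.
      apply Rle_trans with (rsum (fun n => / (INR (S n) * INR (S n))) (seq 1 N)).
      { apply rsum_le. intros n. unfold lser. rewrite !Cmod_mult, Cmod_inv, Cmod_cpowR by apply cpowR_nz.
        assert (Hre : Re (Cmult (RtoC 2) s) = 2 * Re s) by (destruct s; unfold Re; simpl; ring). rewrite Hre.
        rewrite pw_inv. rewrite <- pw_m2 by (apply lt_0_INR; lia).
        assert (pw (INR (S n)) (- (2 * Re s)) <= pw (INR (S n)) (-2)).
        { unfold pw. apply exp_le. assert (0 <= ln (INR (S n))).
          { rewrite <- ln_1. apply ln_le. lra. apply (le_INR 1); lia. } nra. }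
        pose proof (Cmod_ge_0 (e1 (Z.of_nat (S n)))). pose proof (Cmod_ge_0 (e2 (Z.of_nat (S n)))).
        specialize (B1 (Z.of_nat (S n))). specialize (B2 (Z.of_nat (S n))). pose proof (pw_pos (INR (S n)) (- (2 * Re s))).
        assert (Cmod (e1 (Z.of_nat (S n))) * Cmod (e2 (Z.of_nat (S n))) <= 1) by nra. nra. }
      unfold N. pose proof (rsum_inv_sq (fold_right max 0%nat l0)). pose proof (pos_INR (S (S (fold_right max 0%nat l0)))).
      assert (0 < / INR (S (S (fold_right max 0%nat l0)))) by (apply Rinv_0_lt_compat, lt_0_INR; lia). lra. }
    replace (Cminus L (RtoC 1)) with (Cminus (lsum (lser e1 e2 s) (seq 1 N)) (Cminus (Cplus (RtoC 1) (lsum (lser e1 e2 s) (seq 1 N))) L)) by ring.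
    eapply Rle_trans. unfold Cminus at 1. apply Cmod_triangle. rewrite Cmod_opp. lra. }
  rewrite EL in Hb. replace (Cminus (RtoC 0) (RtoC 1)) with (Copp (RtoC 1)) in Hb by ring.
  rewrite Cmod_opp, Cmod_1 in Hb. lra.
Qed.

Open Scope R_scope.

Theorem lemma5p1 (k : Z) (q1 q2 qs1 qs2 : Z) (chi1 chi2 chis1 chis2 : Z -> C) (z s : C) :
  primitive_char qs1 chis1 -> primitive_char qs2 chis2 ->
  induced_by q1 chi1 qs1 chis1 -> induced_by q2 chi2 qs2 chis2 ->
  Cmult (chi1 (-1)%Z) (chi2 (-1)%Z) = cpowZ (RtoC (-1)) k ->
  (0 < Im z)%R -> (1 < Re s)%R ->
  Eis q2 chi1 chi2 k z s =
  Cmult (Cdiv (Lfun (Cmult (RtoC 2) s) (fun n => Cmult (chis1 n) (chis2 n)))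
              (Lfun (Cmult (RtoC 2) s) (fun n => Cmult (chi1 n) (chi2 n))))
    (divsum q1 (fun a => divsum q2 (fun b =>
       Cmult (Cdiv (Cmult (Cmult (RtoC (IZR (moebius a))) (chis1 a))
                          (Cmult (RtoC (IZR (moebius b))) (chis2 b)))
                   (cpowR (IZR (a * b)) s))
             (Eis qs2 chis1 chis2 k
                (Cmult (RtoC (IZR (a * q2) / IZR (b * qs2))) z) s)))).
Proof.
  intros _ _ Hi1 Hi2 _ Hy Hs.
  pose proof Hi1 as [D1 [Ds1 [Dv1 I1]]]. pose proof Hi2 as [D2 [Ds2 [Dv2 I2]]].
  assert (B1 := char_le1 _ _ D1). assert (B2 := char_le1 _ _ D2).
  assert (Bs1 := char_le1 _ _ Ds1). assert (Bs2 := char_le1 _ _ Ds2).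
  destruct D1 as [Hq1 [O1 [M1 _]]]. destruct D2 as [Hq2 [O2 [M2 _]]].
  destruct Ds1 as [Hqs1 [Os1 [Ms1 _]]]. destruct Ds2 as [Hqs2 [Os2 [Ms2 _]]].
  destruct (summable_has_sum (prod_dec Z.eq_dec Z.eq_dec) _ (ecop_summable q2 chi1 chi2 k z s Hy ltac:(lia) Hs B1 B2)) as [Scop HScop].
  destruct (summable_has_sum Nat.eq_dec _ (lser_summable chi1 chi2 s Hs B1 B2)) as [L HL].
  destruct (summable_has_sum Nat.eq_dec _ (lser_summable chis1 chis2 s Hs Bs1 Bs2)) as [Ls HLs].
  assert (Hyab : forall a b, (0 < a)%Z -> (0 < b)%Z -> 0 < Im (zab q2 qs2 a b z)).
  { intros a b Ha Hb. rewrite Im_zab. apply Rmult_lt_0_compat; auto. apply Rdiv_lt_0_compat; apply IZR_lt; lia. }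
  assert (Hex : forall a b, exists S, (0 < a)%Z -> (0 < b)%Z ->
     has_sum (fun p => eis_term qs2 chis1 chis2 k (zab q2 qs2 a b z) s (fst p) (snd p)) S).
  { intros a b. destruct (Z_lt_dec 0 a) as [Ha|Ha]; [destruct (Z_lt_dec 0 b) as [Hb|Hb]|].
    - destruct (summable_has_sum (prod_dec Z.eq_dec Z.eq_dec) _
        (ecop_summable qs2 chis1 chis2 k (zab q2 qs2 a b z) s (Hyab a b Ha Hb) ltac:(lia) Hs Bs1 Bs2)) as [S0 H0].
      exists S0. auto.
    - exists (RtoC 0). intros; lia.
    - exists (RtoC 0). intros; lia. }
  set (Sf := fun a b => proj1_sig (constructive_indefinite_description _ (Hex a b))).
  assert (HSf : forall a b, (0 < a)%Z -> (0 < b)%Z ->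
     has_sum (fun p => eis_term qs2 chis1 chis2 k (zab q2 qs2 a b z) s (fst p) (snd p)) (Sf a b)).
  { intros a b Ha Hb. exact (proj2_sig (constructive_indefinite_description _ (Hex a b)) Ha Hb). }
  clearbody Sf.
  rewrite (Eis_val _ _ _ _ _ _ _ HScop).
  rewrite (Lfun_val (Cmult (RtoC 2) s) (fun n => Cmult (chi1 n) (chi2 n)) L HL).
  rewrite (Lfun_val (Cmult (RtoC 2) s) (fun n => Cmult (chis1 n) (chis2 n)) Ls HLs).
  set (Kc := fun a b => Cmult (Cmult (chis1 a) (chis2 b)) (Cinv (cpowR (IZR (a * b)) s))).
  set (mu2 := fun a b => Cmult (RtoC (IZR (moebius a))) (RtoC (IZR (moebius b)))).
  set (W := divsum q1 (fun a => divsum q2 (fun b => Cmult (Cmult (mu2 a b) (Kc a b)) (Sf a b)))).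
  pose proof (fact1 q2 chi1 chi2 k z s L Scop Hy ltac:(lia) Hs B1 B2 M1 M2 HL HScop) as F1.
  assert (F2 : has_sum (tfull q2 chi1 chi2 k z s)
     (divsum q1 (fun a => divsum q2 (fun b => Cmult (mu2 a b) (Cmult (Kc a b) (Cmult Ls (Sf a b))))))).
  { apply (has_sum_ext (fun p => divsum q1 (fun a => divsum q2 (fun b => Cmult (mu2 a b) (Gab chis1 chis2 q2 qs2 k z s a b p))))).
    { intros [c d]. symmetry. apply (fact2_pt q1 q2 qs1 qs2 chi1 chi2 chis1 chis2 k z s c d Hi1 Hi2 Hy). }
    apply (has_sum_divsum q1 (fun a p => divsum q2 (fun b => Cmult (mu2 a b) (Gab chis1 chis2 q2 qs2 k z s a b p)))).
    intros a Ha _.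
    apply (has_sum_divsum q2 (fun b p => Cmult (mu2 a b) (Gab chis1 chis2 q2 qs2 k z s a b p))).
    intros b Hb _.
    apply has_sum_scal. apply Gab_has_sum; auto.
    apply fact1; auto; try lia. }
  assert (HV : Cmult L Scop = divsum q1 (fun a => divsum q2 (fun b => Cmult (mu2 a b) (Cmult (Kc a b) (Cmult Ls (Sf a b)))))).
  { apply (has_sum_unique (prod_dec Z.eq_dec Z.eq_dec) _ _ _ F1 F2). }
  assert (HV2 : divsum q1 (fun a => divsum q2 (fun b => Cmult (mu2 a b) (Cmult (Kc a b) (Cmult Ls (Sf a b))))) = Cmult W Ls).
  { unfold W. rewrite <- divsum_scal. apply divsum_ext. intros a _ _. rewrite <- divsum_scal.
    apply divsum_ext. intros b _ _. ring. }
  assert (HR : divsum q1 (fun a => divsum q2 (fun b =>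
       Cmult (Cdiv (Cmult (Cmult (RtoC (IZR (moebius a))) (chis1 a))
                          (Cmult (RtoC (IZR (moebius b))) (chis2 b)))
                   (cpowR (IZR (a * b)) s))
             (Eis qs2 chis1 chis2 k (Cmult (RtoC (IZR (a * q2) / IZR (b * qs2))) z) s))) = Cmult W (RtoC (/ 2))).
  { unfold W. rewrite <- divsum_scal. apply divsum_ext. intros a Ha _. rewrite <- divsum_scal.
    apply divsum_ext. intros b Hb _.
    rewrite (Eis_val qs2 chis1 chis2 k (Cmult (RtoC (IZR (a * q2) / IZR (b * qs2))) z) s _ (HSf a b Ha Hb)).
    unfold mu2, Kc. assert (N := cpowR_nz (IZR (a * b)) s). field. auto. }
  rewrite HR.
  assert (HLnz : L <> RtoC 0).
  { apply (L_nz chi1 chi2 s L Hs B1 B2 O1 O2 HL). }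
  rewrite HV2 in HV.
  assert (ES : Scop = Cdiv (Cmult W Ls) L).
  { rewrite <- HV. field. auto. }
  rewrite ES. field. auto.
Qed.
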